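(* Let $d\ge1$ and $q\ge2$ even. There exist a unique constant $C\ne0$ and a unique polynomial $p_{q+1}$ whose monomials have degrees in $\{1,3,\ldots,q+1\}$ such that $\bar p_{q+1,1}(x)=p_{q+1}(x)\mathbbm{1}_{x\le1}$ satisfies $\bar p_{q+1,1}\in\mathcal M_{d,1,q+1}$, $\int_0^\infty x^{d+q}\bar p_{q+1,1}(x)\,dx=C$, and $p_{q+1}(1)=0$. Moreover, this $\bar p_{q+1,1}$ equals $G^{B(1)}_{d,q}$, the derivative of $G^B_{d,q}$.
   Context: $B_{d,i}(g)=\int_0^\infty x^{d-1+i}g(x)dx$, $b_d=2\pi^{d/2}/\Gamma(d/2)$. $\mathcal M_{d,1,q+1}$: functions $g$ on $[0,\infty)$ with $B_{d,1}(g)=-d\,b_d^{-1}$, $B_{d,i}(g)=0$ for $i=3,5,\ldots,q-1$, and $B_{d,q+1}(g)\ne0$. $G^B_{d,q}(x)=\frac{\Gamma(\frac{d+q}{2})}{\pi^{d/2}\Gamma(\frac q2)}P^{(\frac d2,-2)}_{\frac q2+1}(1-2x^2)\mathbbm{1}_{x\le1}$, where $P^{(\alpha,\beta)}_n(x)=\frac{(-1)^n}{2^nn!}(1-x)^{-\alpha}(1+x)^{-\beta}\frac{d^n}{dx^n}[(1-x)^{n+\alpha}(1+x)^{n+\beta}]$ is the Jacobi polynomial. *)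

(* Defs.v *)
From Stdlib Require Import Reals Lra Lia.
From Coquelicot Require Import Coquelicot.
Open Scope R_scope.

Definition Gamma (s : R) : R :=
  RInt_gen (fun t => Rpower t (s - 1) * exp (- t)) (at_right 0) (Rbar_locally p_infty).

Definition b_ (d : nat) : R := 2 * Rpower PI (INR d / 2) / Gamma (INR d / 2).

Definition B_ (d i : nat) (g : R -> R) : R :=
  RInt_gen (fun x => x ^ (d - 1 + i) * g x) (at_point 0) (Rbar_locally p_infty).

Definition in_M (d q : nat) (g : R -> R) : Prop :=
  B_ d 1 g = - INR d / b_ d /\
  (forall i : nat, Nat.Odd i -> (3 <= i <= q - 1)%nat -> B_ d i g = 0) /\
  B_ d (q + 1) g <> 0.

Definition ind_le1 (x : R) : R := if Rle_dec x 1 then 1 else 0.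

(* Jacobi polynomial via the Rodrigues formula, valid for -1 < y < 1 *)
Definition jacobi_rod (n : nat) (a b : R) (y : R) : R :=
  (-1) ^ n / (2 ^ n * INR (Factorial.fact n)) * Rpower (1 - y) (- a) * Rpower (1 + y) (- b)
  * Derive_n (fun t => Rpower (1 - t) (INR n + a) * Rpower (1 + t) (INR n + b)) n y.

Definition jacobiP (n : nat) (a b : R) (y : R) : R :=
  if Rlt_dec (-1) y then
    if Rlt_dec y 1 then jacobi_rod n a b y
    else if Req_EM_T y 1 then
      real (Lim_seq (fun k => jacobi_rod n a b (1 - / INR (k + 2))))
    else 0
  else if Req_EM_T y (-1) then
    real (Lim_seq (fun k => jacobi_rod n a b (-1 + / INR (k + 2))))
  else 0.

Definition GB (d q : nat) (x : R) : R :=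
  Gamma ((INR d + INR q) / 2) / (Rpower PI (INR d / 2) * Gamma (INR q / 2))
  * jacobiP (q / 2 + 1) (INR d / 2) (-2) (1 - 2 * x ^ 2) * ind_le1 x.

Definition podd (q : nat) (c : nat -> R) (x : R) : R :=
  sum_f_R0 (fun k => c k * x ^ (2 * k + 1)) (q / 2).

Definition pbar (q : nat) (c : nat -> R) (x : R) : R := podd q c x * ind_le1 x.

(* Main.v *)
Require Import Defs.
From Stdlib Require Import Reals Lra Lia.
From Coquelicot Require Import Coquelicot.
Open Scope R_scope.

Fixpoint cb (n k : nat) : R :=
  match n, k with
  | _, O => 1
  | O, S _ => 0
  | S n', S k' => cb n' k' + cb n' (S k')
  end.

Lemma cb_gt n k : (n < k)%nat -> cb n k = 0.
Proof. revert k; induction n; intros [|k] H; simpl; try lia; auto.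
  rewrite !IHn; try lia; ring. Qed.

Lemma cb_n0 n : cb n 0 = 1. Proof. destruct n; reflexivity. Qed.

Lemma sum_shift (g : nat -> R) N :
  sum_f_R0 g (S N) = g O + sum_f_R0 (fun l => g (S l)) N.
Proof. induction N; simpl in *. ring. rewrite IHN. ring. Qed.

Lemma sum_ext (f g : nat -> R) N : (forall l, (l <= N)%nat -> f l = g l) ->
  sum_f_R0 f N = sum_f_R0 g N.
Proof. intros; apply sum_eq; auto. Qed.

Lemma sum_scal (c : R) (g : nat -> R) N : sum_f_R0 (fun l => c * g l) N = c * sum_f_R0 g N.
Proof. induction N; simpl; [|rewrite IHN]; ring. Qed.

Lemma sum_plus' (f g : nat -> R) N : sum_f_R0 (fun l => f l + g l) N = sum_f_R0 f N + sum_f_R0 g N.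
Proof. induction N; simpl; [|rewrite IHN]; ring. Qed.

Lemma sum_minus' (f g : nat -> R) N : sum_f_R0 (fun l => f l - g l) N = sum_f_R0 f N - sum_f_R0 g N.
Proof. induction N; simpl; [|rewrite IHN]; ring. Qed.

Definition altsum (N : nat) (f : nat -> R) : R :=
  sum_f_R0 (fun l => cb N l * (-1) ^ l * f l) N.

Lemma altsum_ext N f g : (forall l, (l <= N)%nat -> f l = g l) -> altsum N f = altsum N g.
Proof. intros H; unfold altsum; apply sum_ext; intros; rewrite H; auto. Qed.

Lemma altsum_plus N f g : altsum N (fun l => f l + g l) = altsum N f + altsum N g.
Proof. unfold altsum; rewrite <- sum_plus'; apply sum_ext; intros; ring. Qed.

Lemma altsum_scal N c f : altsum N (fun l => c * f l) = c * altsum N f.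
Proof. unfold altsum. rewrite <- sum_scal. apply sum_ext; intros; ring. Qed.

Lemma altsum_S N f : altsum N f - altsum N (fun l => f (S l)) = altsum (S N) f.
Proof.
  unfold altsum. rewrite sum_shift. rewrite cb_n0.
  rewrite (sum_ext (fun l => cb (S N) (S l) * (-1) ^ S l * f (S l))
     (fun l => cb N (S l) * (-1) ^ (S l) * f (S l) - cb N l * (-1) ^ l * f (S l)))
    by (intros; simpl; ring).
  rewrite sum_minus'.
  assert (E: sum_f_R0 (fun l => cb N l * (-1) ^ l * f l) N =
     f O + sum_f_R0 (fun l => cb N (S l) * (-1) ^ (S l) * f (S l)) N).
  { pose proof (sum_shift (fun l => cb N l * (-1) ^ l * f l) N) as E1.
    change (sum_f_R0 (fun l => cb N l * (-1) ^ l * f l) (S N)) with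
      (sum_f_R0 (fun l => cb N l * (-1) ^ l * f l) N + cb N (S N) * (-1) ^ (S N) * f (S N)) in E1.
    rewrite (cb_gt N (S N)) in E1 by lia. rewrite cb_n0 in E1. rewrite !Rmult_0_l, Rplus_0_r in E1. rewrite E1. rewrite pow_O. ring. }
  rewrite E. simpl. ring.
Qed.

Fixpoint deg_lt (k : nat) (f : nat -> R) : Prop :=
  match k with
  | O => forall l, f l = 0
  | S k => deg_lt k (fun l => f (S l) - f l)
  end.

Lemma deg_lt_ext k f g : (forall l, f l = g l) -> deg_lt k f -> deg_lt k g.
Proof.
  revert f g; induction k; simpl; intros f g E H.
  - intros l; rewrite <- E; auto.
  - eapply IHk; [|exact H]. intros; simpl; rewrite !E; auto.
Qed.

Lemma altsum_deg N f : deg_lt N f -> altsum N f = 0.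
Proof.
  revert f; induction N; intros f H.
  - unfold altsum; simpl. rewrite H; ring.
  - rewrite <- altsum_S. simpl in H. apply IHN in H.
    assert (M: altsum N (fun l => f (S l) - f l) = altsum N (fun l => f (S l)) - altsum N f).
    { unfold altsum. rewrite <- sum_minus'. apply sum_ext; intros; ring. }
    rewrite M in H. lra.
Qed.

Lemma deg_lt_plus k f g : deg_lt k f -> deg_lt k g -> deg_lt k (fun l => f l + g l).
Proof.
  revert f g; induction k; simpl; intros f g Hf Hg.
  - intros l; rewrite Hf, Hg; ring.
  - eapply deg_lt_ext; [|apply (IHk _ _ Hf Hg)]. intros; simpl; ring.
Qed.

Lemma deg_lt_scal k c f : deg_lt k f -> deg_lt k (fun l => c * f l).
Proof.
  revert f; induction k; simpl; intros f Hf.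
  - intros l; rewrite Hf; ring.
  - eapply deg_lt_ext; [|apply (IHk _ Hf)]. intros; simpl; ring.
Qed.

Lemma deg_lt_shift k f : deg_lt k f -> deg_lt k (fun l => f (S l)).
Proof.
  revert f; induction k; simpl; intros f Hf.
  - intros l; rewrite Hf; ring.
  - apply (IHk _ Hf).
Qed.

Lemma deg_lt_mono k f : deg_lt k f -> deg_lt (S k) f.
Proof.
  revert f; induction k; intros f Hf.
  - simpl in *; intros l; rewrite !Hf; ring.
  - change (deg_lt (S k) (fun l => f (S l) - f l)). apply IHk. exact Hf.
Qed.

Lemma deg_lt_const c : deg_lt 1 (fun _ => c).
Proof. simpl; intros; ring. Qed.

Lemma deg_lt_lin k c f : deg_lt k f -> deg_lt (S k) (fun l => (c + INR l) * f l).
Proof.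
  revert f c; induction k; intros f c Hf.
  - simpl in *. intros l; rewrite !Hf; ring.
  - change (deg_lt (S k) (fun l => (c + INR (S l)) * f (S l) - (c + INR l) * f l)).
    eapply deg_lt_ext.
    2:{ apply deg_lt_plus. apply (IHk _ c Hf). apply deg_lt_shift. exact Hf. }
    intros l; rewrite S_INR. ring.
Qed.

Fixpoint rp (y : R) (k : nat) : R :=
  match k with O => 1 | S k' => rp y k' * (y + INR (S k')) end.

Lemma rp_lin k p c f : deg_lt k f -> deg_lt (k + p) (fun l => rp (c + INR l) p * f l).
Proof.
  intros Hf; induction p.
  - rewrite Nat.add_0_r. eapply deg_lt_ext; [|exact Hf]. intros; simpl; ring.
  - rewrite Nat.add_succ_r. eapply deg_lt_ext.
    2:{ apply (deg_lt_lin _ (c + INR (S p)) _ IHp). }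
    intros l; simpl. ring.
Qed.

Lemma rp_add y p r : rp y (p + r) = rp y p * rp (y + INR p) r.
Proof.
  induction r.
  - rewrite Nat.add_0_r; simpl; ring.
  - rewrite Nat.add_succ_r. change (rp y (S (p + r))) with (rp y (p + r) * (y + INR (S (p + r)))).
    change (rp (y + INR p) (S r)) with (rp (y + INR p) r * (y + INR p + INR (S r))).
    rewrite IHr. rewrite !S_INR, plus_INR. ring.
Qed.

Lemma rp_shift b N : rp b (S N) = (b + 1) * rp (b + 1) N.
Proof.
  induction N. simpl; ring.
  change (rp b (S (S N)) = (b + 1) * (rp (b + 1) N * (b + 1 + INR (S N)))).
  change (rp b (S (S N))) with (rp b (S N) * (b + INR (S (S N)))).
  rewrite IHN. rewrite (S_INR (S N)). ring.
Qed.

Lemma rp_pos b N : 0 < b -> 0 < rp b N.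
Proof. intros Hb; induction N. simpl; lra.
  change (rp b (S N)) with (rp b N * (b + INR (S N))).
  apply Rmult_lt_0_compat; auto. pose proof (pos_INR (S N)). lra. Qed.

Lemma rp_neq0 c N : (forall t, (1 <= t <= N)%nat -> c + INR t <> 0) -> rp c N <> 0.
Proof. induction N; intros H. simpl; lra.
  change (rp c (S N)) with (rp c N * (c + INR (S N))). apply Rmult_integral_contrapositive; split.
  apply IHN; intros; apply H; lia. apply H; lia. Qed.

Lemma altsum_recip N b : 0 < b ->
  altsum N (fun l => / (b + INR l)) = INR (Factorial.fact N) / (b * rp b N).
Proof.
  revert b; induction N; intros b Hb.
  - unfold altsum; simpl. field. lra.
  - rewrite <- altsum_S. rewrite IHN by lra.
    rewrite (altsum_ext N _ (fun l => / ((b + 1) + INR l))).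
    2:{ intros; rewrite S_INR; f_equal; ring. }
    rewrite IHN by lra. rewrite <- rp_shift.
    assert (0 < rp b N) by (apply rp_pos; lra).
    pose proof (pos_INR N).
    change (rp b (S N)) with (rp b N * (b + INR (S N))).
    rewrite fact_simpl, mult_INR, !S_INR. field. repeat split; lra.
Qed.

Fixpoint Qq (c0 z : R) (N : nat) : R :=
  match N with O => 0 | S N' => rp (z + c0) N' + (c0 + INR (S N')) * Qq c0 z N' end.

Lemma Qq_spec c0 z N : rp (z + c0) N = rp c0 N + z * Qq c0 z N.
Proof. induction N. simpl; ring.
  change (rp (z + c0) (S N)) with (rp (z + c0) N * (z + c0 + INR (S N))).
  change (rp c0 (S N)) with (rp c0 N * (c0 + INR (S N))).
  change (Qq c0 z (S N)) with (rp (z + c0) N + (c0 + INR (S N)) * Qq c0 z N).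
  rewrite IHN. ring. Qed.

Lemma Qq_deg c0 b N : deg_lt N (fun l => Qq c0 (b + INR l) N).
Proof.
  induction N.
  - simpl; auto.
  - change (deg_lt (S N) (fun l => rp (b + INR l + c0) N + (c0 + INR (S N)) * Qq c0 (b + INR l) N)).
    apply deg_lt_plus.
    + eapply deg_lt_ext. 2:{ apply (rp_lin 1 N (b + c0) _ (deg_lt_const 1)). }
      intros l. cbv beta. rewrite Rmult_1_r. f_equal; ring.
    + apply deg_lt_scal. apply deg_lt_mono. exact IHN.
Qed.

Definition Sj (a : R) (N j : nat) : R :=
  altsum N (fun l => rp (a + INR l) (N + 2) /
     ((a + INR j + INR l) * (a + INR j + INR l + 1) * (a + INR j + INR l + 2))).

Lemma Sj_mid a N j : 0 < a -> (1 <= j <= N)%nat -> Sj a N j = 0.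
Proof.
  intros Ha Hj. destruct j as [|j']; [lia|].
  unfold Sj. apply altsum_deg.
  assert (D: deg_lt N (fun l => rp (a + INR l) j' * (rp (a + INR (j' + 3) + INR l) (N - S j') * 1))).
  { replace N with (1 + (N - S j') + j')%nat at 1 by lia.
    apply rp_lin. apply rp_lin. apply deg_lt_const. }
  eapply deg_lt_ext; [|exact D]. intros l. cbv beta.
  replace (N + 2)%nat with ((j' + 3) + (N - S j'))%nat by lia.
  rewrite rp_add.
  replace (j' + 3)%nat with (S (S (S j'))) by lia.
  change (rp (a + INR l) (S (S (S j')))) with
    (rp (a + INR l) j' * (a + INR l + INR (S j')) * (a + INR l + INR (S (S j'))) * (a + INR l + INR (S (S (S j'))))).
  replace (a + INR l + INR (S (S (S j')))) with (a + INR (S (S (S j'))) + INR l) by ring.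
  pose proof (pos_INR l). pose proof (pos_INR j').
  rewrite !S_INR. field. repeat split; lra.
Qed.

Lemma Sj_0 a N : 0 < a -> Sj a N 0 = rp 2 N * (INR (Factorial.fact N) / (a * rp a N)).
Proof.
  intros Ha. unfold Sj.
  rewrite (altsum_ext N _ (fun l => rp 2 N * / (a + INR l) + Qq 2 (a + INR l) N)).
  - rewrite altsum_plus, altsum_scal, altsum_recip by lra.
    rewrite (altsum_deg N (fun l => Qq 2 (a + INR l) N)) by apply Qq_deg. ring.
  - intros l _. pose proof (pos_INR l).
    replace (N + 2)%nat with (2 + N)%nat by lia. rewrite rp_add.
    replace (a + INR l + INR 2) with ((a + INR l) + 2) by (simpl; ring).
    rewrite (Qq_spec 2 (a + INR l) N).
    simpl rp at 1. simpl INR. field. repeat split; lra.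
Qed.

Lemma Sj_last a N : 0 < a ->
  Sj a N (S N) = rp (- (INR N + 3)) N * (INR (Factorial.fact N) / ((a + INR N + 3) * rp (a + INR N + 3) N)).
Proof.
  intros Ha. unfold Sj.
  rewrite (altsum_ext N _ (fun l => rp (- (INR N + 3)) N * / ((a + INR N + 3) + INR l)
                                    + Qq (- (INR N + 3)) ((a + INR N + 3) + INR l) N)).
  - rewrite altsum_plus, altsum_scal, altsum_recip.
    rewrite (altsum_deg N (fun l => Qq _ (a + INR N + 3 + INR l) N)) by apply Qq_deg. ring.
    pose proof (pos_INR N). lra.
  - intros l _. pose proof (pos_INR l). pose proof (pos_INR N).
    replace (N + 2)%nat with (S (S N)) by lia.
    change (rp (a + INR l) (S (S N))) with (rp (a + INR l) N * (a + INR l + INR (S N)) * (a + INR l + INR (S (S N)))).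
    replace (a + INR l) with (a + INR N + 3 + INR l + - (INR N + 3)) at 1 by ring.
    rewrite (Qq_spec (- (INR N + 3)) (a + INR N + 3 + INR l) N).
    rewrite !S_INR. field. repeat split; lra.
Qed.

Lemma ball_R x e y : ball x e y <-> Rabs (y - x) < e.
Proof. unfold ball; simpl; unfold AbsRing_ball, abs, minus, plus, opp; simpl. tauto. Qed.

Lemma exRInt_cont (f : R -> R) a b :
  (forall z, Rmin a b <= z <= Rmax a b -> continuous f z) -> ex_RInt f a b.
Proof. intros H. apply (ex_RInt_continuous (V:=R_CompleteNormedModule)); exact H. Qed.

Lemma RInt_cor (f : R -> R) a b : ex_RInt f a b -> is_RInt f a b (RInt f a b).
Proof. intros H. apply (RInt_correct (V:=R_CompleteNormedModule)); exact H. Qed.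

Lemma RInt_Chasles_R (f : R -> R) a b c : ex_RInt f a b -> ex_RInt f b c ->
  @eq R (RInt f a b + RInt f b c) (RInt f a c).
Proof. intros; apply (RInt_Chasles (V:=R_CompleteNormedModule)); auto. Qed.

Definition fG (s t : R) := Rpower t (s - 1) * exp (- t).

Lemma is_derive_Rpow r t : 0 < t -> is_derive (fun x => Rpower x r) t (r * Rpower t (r - 1)).
Proof. intros; apply is_derive_Reals, derivable_pt_lim_power; auto. Qed.

Lemma ex_derive_Rpow r t : 0 < t -> ex_derive (fun x => Rpower x r) t.
Proof. intros H; eexists; apply is_derive_Rpow; auto. Qed.

Lemma is_derive_expm t : is_derive (fun x => exp (- x)) t (- exp (- t)).
Proof. auto_derive; auto; ring. Qed.

Lemma ex_derive_fG s t : 0 < t -> ex_derive (fG s) t.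
Proof. intros H; unfold fG. apply ex_derive_mult. apply ex_derive_Rpow; auto.
  eexists; apply is_derive_expm. Qed.

Lemma fG_cont s t : 0 < t -> continuous (fG s) t.
Proof. intros; apply (ex_derive_continuous (fG s)), ex_derive_fG; auto. Qed.

Lemma Rpow_cont r t : 0 < t -> continuous (fun x => Rpower x r) t.
Proof. intros; apply (ex_derive_continuous (fun x => Rpower x r)), ex_derive_Rpow; auto. Qed.

Lemma RInt_abs_cmp f g b b' :
  (forall x, Rmin b b' <= x <= Rmax b b' -> 0 <= f x <= g x) ->
  ex_RInt f b b' -> ex_RInt g b b' -> Rabs (RInt f b b') <= Rabs (RInt g b b').
Proof.
  intros H Hf Hg. destruct (Rle_dec b b') as [Hb|Hb].
  - rewrite Rmin_left, Rmax_right in H by lra.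
    assert (0 <= RInt f b b') by (apply RInt_ge_0; auto; intros; apply H; lra).
    assert (RInt f b b' <= RInt g b b') by (apply RInt_le; auto; intros; apply H; lra).
    rewrite !Rabs_pos_eq; lra.
  - rewrite Rmin_right, Rmax_left in H by lra.
    apply ex_RInt_swap in Hf; apply ex_RInt_swap in Hg.
    rewrite <- (opp_RInt_swap f) by exact Hf. rewrite <- (opp_RInt_swap g) by exact Hg.
    change (Rabs (- RInt f b' b) <= Rabs (- RInt g b' b)). rewrite !Rabs_Ropp.
    assert (0 <= RInt f b' b) by (apply RInt_ge_0; auto; try lra; intros; apply H; lra).
    assert (RInt f b' b <= RInt g b' b) by (apply RInt_le; auto; try lra; intros; apply H; lra).
    rewrite !Rabs_pos_eq; lra.
Qed.

Lemma ex_gen_cmp (Fb : (R -> Prop) -> Prop) (PF : ProperFilter Fb) (f G : R -> R) (a Gl : R)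
  (D : R -> Prop) :
  Fb D -> (forall b, D b -> ex_RInt f a b) ->
  (forall b b', D b -> D b' -> Rabs (RInt f a b - RInt f a b') <= Rabs (G b - G b')) ->
  filterlim G Fb (locally Gl) -> ex_RInt_gen f (at_point a) Fb.
Proof.
  intros HD Hex Hle HG.
  destruct (proj1 (filterlim_locally_cauchy (U:=R_CompleteSpace) (F:=Fb) (fun b => RInt f a b))) as [y Hy].
  { intros eps.
    assert (E2: 0 < eps / 2) by (destruct eps; simpl; lra).
    pose proof (proj1 (filterlim_locally G Gl) HG (mkposreal _ E2)) as HB.
    exists (fun b => D b /\ ball Gl (mkposreal _ E2) (G b)). split.
    - apply filter_and; auto.
    - intros u v [Du Bu] [Dv Bv]. apply ball_R.
      assert (Bu' : Rabs (G u - Gl) < eps / 2) by exact Bu.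
      assert (Bv' : Rabs (G v - Gl) < eps / 2) by exact Bv.
      simpl in *. specialize (Hle v u Dv Du).
      assert (Rabs (G v - G u) <= Rabs (G v - Gl) + Rabs (G u - Gl)).
      { replace (G v - G u) with ((G v - Gl) + - (G u - Gl)) by ring.
        rewrite <- (Rabs_Ropp (G u - Gl)). apply Rabs_triang. }
      lra. }
  exists y. apply filterlimi_lim_ext_loc with (fun ab => RInt f a (snd ab)).
  - apply (Filter_prod _ _ _ (fun x => x = a) D); [reflexivity|auto|].
    intros x yy -> Dy. simpl. apply (RInt_correct f a yy), Hex; auto.
  - eapply filterlim_comp. apply filterlim_snd. exact Hy.
Qed.

Lemma Rpower_pos x y : 0 < Rpower x y.
Proof. unfold Rpower; apply exp_pos. Qed.

Lemma gamma_right s : 0 < s <= 1 -> ex_RInt_gen (fG s) (at_point 1) (Rbar_locally p_infty).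
Proof.
  intros Hs.
  apply (ex_gen_cmp _ (Rbar_locally_filter p_infty) (fG s) (fun b => - exp (- b)) 1 0 (fun b => 1 < b)).
  - exists 1; auto.
  - intros b Hb. apply exRInt_cont. intros z Hz.
    rewrite Rmin_left, Rmax_right in Hz by lra. apply fG_cont; lra.
  - intros b b' Hb Hb'.
    assert (Ef: forall u v, 1 <= u -> 1 <= v -> ex_RInt (fG s) u v).
    { intros u v Hu Hv. apply exRInt_cont. intros z Hz. apply fG_cont.
      assert (Rmin u v >= 1) by (unfold Rmin; destruct Rle_dec; lra). lra. }
    assert (Ch := RInt_Chasles_R (fG s) 1 b' b (Ef 1 b' ltac:(lra) ltac:(lra)) (Ef b' b ltac:(lra) ltac:(lra))).
    replace (RInt (fG s) 1 b - RInt (fG s) 1 b') with (RInt (fG s) b' b) by lra.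
    assert (Eg: is_RInt (fun x => exp (- x)) b' b (- exp (- b) - - exp (- b'))).
    { apply (is_RInt_derive (fun x => - exp (- x))).
      - intros x _. auto_derive; auto; ring.
      - intros x _. apply (ex_derive_continuous (fun x => exp (- x))). eexists; apply is_derive_expm. }
    rewrite <- (is_RInt_unique _ _ _ _ Eg).
    apply RInt_abs_cmp.
    + intros x Hx. assert (1 <= x) by (assert (Rmin b' b >= 1) by (unfold Rmin; destruct Rle_dec; lra); lra).
      unfold fG. split. apply Rmult_le_pos; [left; apply Rpower_pos|left; apply exp_pos].
      rewrite <- (Rmult_1_l (exp (- x))) at 2. apply Rmult_le_compat_r. left; apply exp_pos.
      apply Rle_trans with (Rpower x 0); [apply Rle_Rpower; lra | rewrite Rpower_O; lra].
    + apply Ef; lra.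
    + eexists; exact Eg.
  - apply filterlim_locally. intros eps. exists (- ln eps). intros b Hb.
    apply ball_R. rewrite Rminus_0_r, Rabs_Ropp, Rabs_pos_eq by (left; apply exp_pos).
    destruct eps as [e He]; simpl in *. rewrite <- (exp_ln e He). apply exp_increasing. lra.
Qed.

Lemma Rpow_lim0 s : 0 < s -> filterlim (fun b => Rpower b s / s) (at_right 0) (locally 0).
Proof.
  intros Hs. apply filterlim_locally. intros [e He].
  assert (Hd: 0 < Rpower (e * s) (/ s)) by apply Rpower_pos.
  exists (mkposreal _ Hd). intros y By Hy. apply ball_R.
  assert (By' : Rabs (y - 0) < Rpower (e * s) (/ s)) by exact By. clear By. simpl.
  rewrite Rminus_0_r in *. rewrite Rabs_pos_eq in By' by lra.
  assert (Rpower y s < Rpower (Rpower (e * s) (/ s)) s) by (apply Rlt_Rpower_l; lra).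
  rewrite Rpower_mult, Rinv_l, Rpower_1 in H by (try apply Rmult_lt_0_compat; lra).
  rewrite Rabs_pos_eq. apply (Rmult_lt_reg_r s); auto. unfold Rdiv; rewrite Rmult_assoc, Rinv_l; lra.
  unfold Rdiv; apply Rmult_le_pos; [left; apply Rpower_pos | left; apply Rinv_0_lt_compat; lra].
Qed.

Lemma gamma_left s : 0 < s -> ex_RInt_gen (fG s) (at_right 0) (at_point 1).
Proof.
  intros Hs.
  assert (H1: ex_RInt_gen (fG s) (at_point 1) (at_right 0)).
  { apply (ex_gen_cmp _ (at_right_proper_filter 0) (fG s) (fun b => Rpower b s / s) 1 0 (fun b => 0 < b < 1)).
    - exists (mkposreal 1 Rlt_0_1). intros y By Hy.
      assert (By' : Rabs (y - 0) < 1) by exact By.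
      rewrite Rminus_0_r, Rabs_pos_eq in By'; lra.
    - intros b Hb. apply exRInt_cont. intros z Hz.
      rewrite Rmin_right, Rmax_left in Hz by lra. apply fG_cont; lra.
    - intros b b' Hb Hb'.
      assert (Ef: forall u v, 0 < u -> 0 < v -> ex_RInt (fG s) u v).
      { intros u v Hu Hv. apply exRInt_cont. intros z Hz. apply fG_cont.
        assert (Rmin u v > 0) by (unfold Rmin; destruct Rle_dec; lra). lra. }
      assert (Ch := RInt_Chasles_R (fG s) 1 b' b (Ef 1 b' ltac:(lra) ltac:(lra)) (Ef b' b ltac:(lra) ltac:(lra))).
      replace (RInt (fG s) 1 b - RInt (fG s) 1 b') with (RInt (fG s) b' b) by lra.
      assert (Eg: is_RInt (fun x => Rpower x (s - 1)) b' b (Rpower b s / s - Rpower b' s / s)).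
      { apply (is_RInt_derive (fun x => Rpower x s / s)).
        - intros x Hx. assert (0 < x) by (assert (Rmin b' b > 0) by (unfold Rmin; destruct Rle_dec; lra); lra).
          apply (is_derive_ext (fun x => / s * Rpower x s)). intros t; unfold Rdiv; apply Rmult_comm.
          replace (Rpower x (s - 1)) with (/ s * (s * Rpower x (s - 1))) by (field; lra).
          apply is_derive_scal. apply is_derive_Rpow; auto.
        - intros x Hx. assert (0 < x) by (assert (Rmin b' b > 0) by (unfold Rmin; destruct Rle_dec; lra); lra).
          apply Rpow_cont; auto. }
      rewrite <- (is_RInt_unique _ _ _ _ Eg).
      apply RInt_abs_cmp.
      + intros x Hx. assert (0 < x) by (assert (Rmin b' b > 0) by (unfold Rmin; destruct Rle_dec; lra); lra).
        unfold fG. split. apply Rmult_le_pos; [left; apply Rpower_pos|left; apply exp_pos].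
        rewrite <- (Rmult_1_r (Rpower x (s - 1))) at 2. apply Rmult_le_compat_l. left; apply Rpower_pos.
        rewrite <- exp_0. destruct (Req_dec x 0); [lra|]. left; apply exp_increasing; lra.
      + apply Ef; lra.
      + eexists; exact Eg.
    - apply Rpow_lim0; auto. }
  destruct H1 as [l Hl]. exists (opp l). apply is_RInt_gen_swap; auto.
Qed.

Lemma gamma_ex s : 0 < s <= 1 ->
  is_RInt_gen (fG s) (at_right 0) (Rbar_locally p_infty) (RInt_gen (fG s) (at_right 0) (Rbar_locally p_infty)).
Proof.
  intros Hs. apply (RInt_gen_correct (V:=R_CompleteNormedModule)).
  apply (ex_RInt_gen_Chasles _ 1).
  apply gamma_left; lra. apply gamma_right; lra.
Qed.

Lemma exd_minus (f g : R -> R) x : ex_derive f x -> ex_derive g x -> ex_derive (fun t => f t - g t) x.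
Proof. intros; apply (ex_derive_minus f g); auto. Qed.
Lemma exd_mult (f g : R -> R) x : ex_derive f x -> ex_derive g x -> ex_derive (fun t => f t * g t) x.
Proof. intros; apply (ex_derive_mult f g); auto. Qed.
Lemma exd_scal (f : R -> R) k x : ex_derive f x -> ex_derive (fun t => k * f t) x.
Proof. intros; apply (ex_derive_scal f k); auto. Qed.

Lemma loc_pos x : 0 < x -> locally x (fun y => 0 < y).
Proof. intros H. exists (mkposreal x H). intros y By.
  assert (B : Rabs (y - x) < x) by exact By. apply Rabs_def2 in B. simpl in B. lra. Qed.

Lemma squeeze0 {T} (F : (T -> Prop) -> Prop) {FF : Filter F} (f g : T -> R) (C : R) :
  0 < C -> F (fun x => Rabs (f x) <= C * Rabs (g x)) -> filterlim g F (locally 0) ->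
  filterlim f F (locally 0).
Proof.
  intros HC Hb Hg. apply filterlim_locally. intros [e He].
  assert (He' : 0 < e / C) by (apply Rdiv_lt_0_compat; auto).
  pose proof (proj1 (filterlim_locally g 0) Hg (mkposreal _ He')) as Hg'.
  generalize (filter_and _ _ Hb Hg'). apply filter_imp. intros x [H1 H2].
  apply ball_R. assert (B : Rabs (g x - 0) < e / C) by exact H2. simpl in *.
  rewrite Rminus_0_r in *. apply Rle_lt_trans with (1 := H1).
  apply (Rmult_lt_compat_l C) in B; auto. replace (C * (e / C)) with e in B by (field; lra). exact B.
Qed.

Lemma F_lim0 s : 0 < s -> filterlim (fun t => Rpower t s * exp (- t)) (at_right 0) (locally 0).
Proof.
  intros Hs. apply (squeeze0 _ _ (fun b => Rpower b s / s) s Hs); [|apply Rpow_lim0; auto].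
  exists (mkposreal 1 Rlt_0_1). intros y _ Hy.
  rewrite !Rabs_pos_eq.
  - replace (s * (Rpower y s / s)) with (Rpower y s) by (field; lra).
    rewrite <- (Rmult_1_r (Rpower y s)) at 2. apply Rmult_le_compat_l. left; apply Rpower_pos.
    rewrite <- exp_0. left; apply exp_increasing; lra.
  - unfold Rdiv; apply Rmult_le_pos; [left; apply Rpower_pos | left; apply Rinv_0_lt_compat; lra].
  - apply Rmult_le_pos; [left; apply Rpower_pos | left; apply exp_pos].
Qed.

Lemma ln_le_sqrt t : 0 < t -> ln t <= 2 * sqrt t.
Proof.
  intros Ht. assert (Hs : 0 < sqrt t) by (apply sqrt_lt_R0; auto).
  rewrite <- (sqrt_sqrt t) at 1 by lra. rewrite ln_mult by auto.
  pose proof (exp_ineq1_le (ln (sqrt t))). rewrite exp_ln in H by auto. lra.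
Qed.

Lemma F_liminf s : 0 < s -> filterlim (fun t => Rpower t s * exp (- t)) (Rbar_locally p_infty) (locally 0).
Proof.
  intros Hs. apply filterlim_locally. intros [e He].
  exists (Rmax 1 (Rmax (16 * s * s) (- 2 * ln e))). intros t Ht.
  assert (H1 : 1 < t) by (eapply Rle_lt_trans; [apply Rmax_l|exact Ht]).
  assert (H2 : 16 * s * s < t) by (eapply Rle_lt_trans; [eapply Rle_trans; [apply Rmax_l|apply Rmax_r]|exact Ht]).
  assert (H3 : - 2 * ln e < t) by (eapply Rle_lt_trans; [eapply Rle_trans; [apply Rmax_r|apply Rmax_r]|exact Ht]).
  apply ball_R. simpl. rewrite Rminus_0_r.
  rewrite Rabs_pos_eq by (apply Rmult_le_pos; [left; apply Rpower_pos | left; apply exp_pos]).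
  unfold Rpower. rewrite <- exp_plus.
  assert (Hsq : 4 * s <= sqrt t).
  { rewrite <- (sqrt_square (4 * s)) by lra. apply sqrt_le_1_alt. lra. }
  assert (Hl := ln_le_sqrt t ltac:(lra)).
  assert (Ht2 : sqrt t * sqrt t = t) by (apply sqrt_sqrt; lra).
  assert (s * ln t <= t / 2).
  { apply Rle_trans with (s * (2 * sqrt t)). apply Rmult_le_compat_l; lra.
    assert (0 <= sqrt t) by apply sqrt_pos. nra. }
  apply Rle_lt_trans with (exp (- t / 2)).
  { destruct (Req_dec (s * ln t + - t) (- t / 2)) as [E|E]. rewrite E; lra. left; apply exp_increasing; lra. }
  rewrite <- (exp_ln e He). apply exp_increasing. lra.
Qed.

Lemma gamma_step s g : 0 < s ->
  is_RInt_gen (fG s) (at_right 0) (Rbar_locally p_infty) g ->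
  is_RInt_gen (fG (s + 1)) (at_right 0) (Rbar_locally p_infty) (s * g).
Proof.
  intros Hs Hg.
  set (F := fun t => Rpower t s * exp (- t)).
  set (Fd := fun t => s * Rpower t (s - 1) * exp (- t) - Rpower t s * exp (- t)).
  assert (HF : forall t, 0 < t -> is_derive F t (Fd t)).
  { intros t Ht. unfold F, Fd.
    eapply is_derive_ext. intros; reflexivity.
    replace (s * Rpower t (s - 1) * exp (- t) - Rpower t s * exp (- t)) with
      ((s * Rpower t (s - 1)) * exp (- t) + Rpower t s * (- exp (- t))) by ring.
    apply (is_derive_mult (fun t => Rpower t s) (fun t => exp (- t))).
    apply is_derive_Rpow; auto. apply is_derive_expm. intros; apply Rmult_comm. }
  assert (Hpos : filter_prod (at_right 0) (Rbar_locally p_infty) (fun ab => 0 < fst ab /\ 0 < snd ab)).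
  { apply (Filter_prod _ _ _ (fun x => 0 < x) (fun y => 0 < y)).
    exists (mkposreal 1 Rlt_0_1); auto. exists 0; auto. intros; simpl; auto. }
  assert (Hmin : forall a b x, 0 < a -> 0 < b -> Rmin a b <= x -> 0 < x).
  { intros a b x Ha Hb Hx. assert (Rmin a b > 0) by (unfold Rmin; destruct Rle_dec; lra). lra. }
  assert (HD : is_RInt_gen (Derive F) (at_right 0) (Rbar_locally p_infty) (0 - 0)).
  { apply is_RInt_gen_Derive.
    - eapply filter_imp; [|exact Hpos]. intros [a b] [Ha Hb] x Hx. simpl in *.
      eexists; apply HF. apply (Hmin a b); tauto.
    - eapply filter_imp; [|exact Hpos]. intros [a b] [Ha Hb] x Hx. simpl in *.
      assert (Hx0 : 0 < x) by (apply (Hmin a b); tauto).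
      apply continuous_ext_loc with Fd.
      + generalize (loc_pos x Hx0). apply filter_imp. intros y Hy.
        symmetry; apply is_derive_unique, HF; auto.
      + apply (ex_derive_continuous Fd). unfold Fd.
        apply exd_minus. apply (exd_mult (fun t => s * Rpower t (s - 1))). apply exd_scal. apply ex_derive_Rpow; auto.
        eexists; apply is_derive_expm. apply exd_mult. apply ex_derive_Rpow; auto.
        eexists; apply is_derive_expm.
    - apply F_lim0; auto.
    - apply F_liminf; auto. }
  assert (HS := is_RInt_gen_scal _ s _ Hg).
  assert (HM := is_RInt_gen_minus _ _ _ _ HS HD).
  replace (s * g) with (minus (scal s g) (0 - 0)).
  2:{ unfold minus, plus, opp, scal; simpl. unfold mult; simpl. ring. }
  eapply is_RInt_gen_ext; [|exact HM].
  eapply filter_imp; [|exact Hpos]. intros [a b] [Ha Hb] x Hx. simpl in *.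
  assert (Hx0 : 0 < x) by (apply (Hmin a b); lra).
  rewrite (is_derive_unique _ _ _ (HF x Hx0)).
  unfold minus, plus, opp, scal; simpl. unfold mult; simpl. unfold fG, Fd.
  replace (s + 1 - 1) with s by ring. ring.
Qed.

Lemma gamma_one : is_RInt_gen (fG 1) (at_right 0) (Rbar_locally p_infty) 1.
Proof.
  assert (HD : is_RInt_gen (Derive (fun t => - exp (- t))) (at_right 0) (Rbar_locally p_infty) (0 - -1)).
  { apply is_RInt_gen_Derive.
    - apply filter_forall. intros. auto_derive; auto.
    - apply filter_forall. intros ab x _.
      apply continuous_ext with (fun t => exp (- t)).
      intros t. symmetry. apply is_derive_unique. auto_derive; auto. ring.
      apply (ex_derive_continuous (fun t => exp (- t))). eexists; apply is_derive_expm.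
    - replace (-1) with (- exp (- 0)) by (rewrite Ropp_0, exp_0; ring).
      apply (@filterlim_filter_le_1 R R (locally 0) (at_right 0)). intros P [d Hd]. exists d; intros y By _; apply Hd; auto.
      apply (ex_derive_continuous (fun t => - exp (- t))). auto_derive; auto.
    - apply (squeeze0 _ _ (fun t => Rpower t 1 * exp (- t)) 1 Rlt_0_1).
      exists 1. intros t Ht. rewrite Rpower_1 by lra. rewrite Rabs_Ropp.
      pose proof (exp_pos (- t)). rewrite !Rabs_pos_eq by nra. nra.
      apply F_liminf; lra. }
  cut (is_RInt_gen (fG 1) (at_right 0) (Rbar_locally p_infty) (0 - -1)).
  { intros H; replace (0 - -1) with 1 in H by ring; exact H. }
  eapply is_RInt_gen_ext; [|exact HD].
  apply (Filter_prod _ _ _ (fun x => 0 < x) (fun y => 0 < y)).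
  exists (mkposreal 1 Rlt_0_1); auto. exists 0; auto.
  intros a b Ha Hb x Hx. simpl in *.
  assert (Hx0 : 0 < x) by (assert (Rmin a b > 0) by (unfold Rmin; destruct Rle_dec; lra); lra).
  rewrite (is_derive_unique _ x (exp (- x))).
  unfold fG. replace (1 - 1) with 0 by ring. rewrite Rpower_O by auto. ring.
  auto_derive; auto; ring.
Qed.

Lemma scal_R (a b : R) : scal a b = a * b.
Proof. reflexivity. Qed.

Fixpoint ff (g : R) (k : nat) : R := match k with O => 1 | S k' => ff g k' * (g - INR k') end.

Lemma ff_rp k y : ff (INR k + y) k = rp y k.
Proof.
  revert y; induction k; intros y. reflexivity.
  change (ff (INR (S k) + y) (S k)) with (ff (INR (S k) + y) k * (INR (S k) + y - INR k)).
  replace (INR (S k) + y) with (INR k + (y + 1)) by (rewrite S_INR; ring).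
  rewrite IHk. rewrite rp_shift. ring.
Qed.

Lemma loc_lt1 t : t < 1 -> locally t (fun u => u < 1).
Proof. intros H. assert (H' : 0 < 1 - t) by lra. exists (mkposreal _ H'). intros u Bu.
  assert (B : Rabs (u - t) < 1 - t) by exact Bu. apply Rabs_def2 in B. lra. Qed.

Lemma loc_int y : -1 < y < 1 -> locally y (fun u => -1 < u < 1).
Proof. intros H. assert (H' : 0 < Rmin (1 - y) (y + 1)) by (apply Rmin_pos; lra).
  exists (mkposreal _ H'). intros u Bu.
  assert (B : Rabs (u - y) < Rmin (1 - y) (y + 1)) by exact Bu. apply Rabs_def2 in B.
  pose proof (Rmin_l (1 - y) (y + 1)); pose proof (Rmin_r (1 - y) (y + 1)). simpl in *. lra. Qed.

Lemma is_derive_R1 g t : t < 1 -> is_derive (fun t => Rpower (1 - t) g) t (- (g * Rpower (1 - t) (g - 1))).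
Proof.
  intros Ht.
  assert (H := is_derive_comp (fun x => Rpower x g) (fun t => 1 - t) t (g * Rpower (1 - t) (g - 1)) (-1)
     (is_derive_Rpow g (1 - t) ltac:(lra)) ltac:(auto_derive; auto; ring)).
  replace (- (g * Rpower (1 - t) (g - 1))) with (scal (-1) (g * Rpower (1 - t) (g - 1))).
  exact H. rewrite scal_R. change (@eq R (-1 * (g * Rpower (1 - t) (g - 1))) (- (g * Rpower (1 - t) (g - 1)))). ring.
Qed.

Lemma hd_n g k t : t < 1 ->
  is_derive_n (fun t => Rpower (1 - t) g) k t ((-1) ^ k * ff g k * Rpower (1 - t) (g - INR k)).
Proof.
  revert t; induction k; intros t Ht.
  - simpl. replace (g - 0) with g by ring. ring.
  - change (is_derive (Derive_n (fun t => Rpower (1 - t) g) k) t ((-1) ^ S k * ff g (S k) * Rpower (1 - t) (g - INR (S k)))).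
    apply is_derive_ext_loc with (fun u => (-1) ^ k * ff g k * Rpower (1 - u) (g - INR k)).
    + generalize (loc_lt1 t Ht). apply filter_imp. intros u Hu.
      symmetry. apply is_derive_n_unique. apply IHk; auto.
    + replace ((-1) ^ S k * ff g (S k) * Rpower (1 - t) (g - INR (S k))) with
        (((-1) ^ k * ff g k) * (- ((g - INR k) * Rpower (1 - t) (g - INR k - 1)))).
      apply is_derive_scal. apply is_derive_R1; auto.
      rewrite S_INR. replace (g - (INR k + 1)) with (g - INR k - 1) by ring.
      change (ff g (S k)) with (ff g k * (g - INR k)). simpl pow. ring.
Qed.

Lemma hd_ex g k t : t < 1 -> ex_derive_n (fun t => Rpower (1 - t) g) k t.
Proof.
  intros Ht; destruct k. exact I.
  simpl. eexists. exact (hd_n g (S k) t Ht).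
Qed.

Lemma cb_nn n : cb n n = 1.
Proof. induction n. reflexivity. simpl. rewrite IHn, cb_gt by lia. ring. Qed.

Lemma C_cb n i : (i <= n)%nat -> Binomial.C n i = cb n i.
Proof.
  revert i; induction n; intros i Hi.
  - replace i with O by lia. rewrite C_n_0. reflexivity.
  - destruct i. rewrite C_n_0, cb_n0; auto.
    destruct (Nat.eq_dec i n) as [->|Hne].
    + rewrite C_n_n, cb_nn. auto.
    + rewrite <- pascal by lia. simpl. rewrite !IHn by lia. ring.
Qed.

Definition Jp (N : nat) (a y : R) : R :=
  (1 + y) ^ 2 / (2 ^ (N + 2) * INR (Factorial.fact (N + 2))) *
  sum_f_R0 (fun l => cb N l * (-1) ^ l * 2 ^ (N - l) * rp (a + INR l) (N + 2) * (1 - y) ^ l) N.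

Lemma sum_mult_r (g : nat -> R) c N : sum_f_R0 g N * c = sum_f_R0 (fun l => g l * c) N.
Proof. induction N; simpl; [|rewrite <- IHN]; ring. Qed.

Lemma rod_eq N a y : 0 < a -> -1 < y < 1 -> jacobi_rod (N + 2) a (-2) y = Jp N a y.
Proof.
  intros Ha Hy. unfold jacobi_rod, Jp.
  set (bt := fun l => cb N l * (-1) ^ l * 2 ^ (N - l)).
  set (fj := fun (j : nat) (t : R) => bt j * Rpower (1 - t) (INR (N + 2) + a + INR j)).
  assert (Hloc : locally y (fun t => Rpower (1 - t) (INR (N + 2) + a) * Rpower (1 + t) (INR (N + 2) + -2)
                                     = sum_n (fun j => fj j t) N)).
  { generalize (loc_int y Hy). apply filter_imp. intros t Ht.
    rewrite sum_n_Reals. unfold fj, bt.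
    replace (INR (N + 2) + -2) with (INR N) by (rewrite plus_INR; simpl; ring).
    rewrite Rpower_pow by lra.
    replace (1 + t) with (- (1 - t) + 2) by ring. rewrite binomial.
    rewrite Rmult_comm, sum_mult_r. apply sum_ext. intros l Hl.
    rewrite C_cb by auto. rewrite (Rpower_plus (INR (N + 2) + a) (INR l)), (Rpower_pow l) by lra.
    replace (- (1 - t)) with ((-1) * (1 - t)) by ring. rewrite Rpow_mult_distr. ring. }
  assert (HD : is_derive_n (fun t => sum_n (fun j => fj j t) N) (N + 2) y
                 (sum_n (fun j => Derive_n (fj j) (N + 2) y) N)).
  { apply is_derive_n_sum_n. generalize (loc_lt1 y ltac:(lra)). apply filter_imp.
    intros t Ht l j _ _. unfold fj. apply ex_derive_n_scal_l. apply hd_ex; auto. }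
  apply is_derive_n_ext_loc with (g := fun t => Rpower (1 - t) (INR (N + 2) + a) * Rpower (1 + t) (INR (N + 2) + -2)) in HD.
  2:{ generalize Hloc. apply filter_imp. intros t Ht; symmetry; exact Ht. }
  rewrite (is_derive_n_unique _ _ _ _ HD).
  rewrite sum_n_Reals.
  rewrite (sum_ext _ (fun j => bt j * ((-1) ^ (N + 2) * rp (a + INR j) (N + 2) * Rpower (1 - y) (a + INR j)))).
  2:{ intros j Hj. unfold fj. apply is_derive_n_unique. apply is_derive_n_scal_l.
      replace (a + INR j) with (INR (N + 2) + a + INR j - INR (N + 2)) by ring.
      replace (rp (INR (N + 2) + a + INR j - INR (N + 2)) (N + 2)) with (ff (INR (N + 2) + a + INR j) (N + 2)).
      apply hd_n; lra.
      replace (INR (N + 2) + a + INR j) with (INR (N + 2) + (a + INR j)) by ring. rewrite ff_rp. f_equal; ring. }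
  replace (- -2) with (INR 2) by (simpl; ring). rewrite (Rpower_pow 2) by lra.
  rewrite Rpower_Ropp.
  assert (HP : 0 < Rpower (1 - y) a) by apply Rpower_pos.
  rewrite <- (sum_scal _ _ N). rewrite <- (sum_scal ((1 + y) ^ 2 / (2 ^ (N + 2) * INR (Factorial.fact (N + 2))))).
  apply sum_ext. intros l Hl. unfold bt. rewrite Rpower_plus, Rpower_pow by lra.
  assert (E1 : (-1) ^ (N + 2) * (-1) ^ (N + 2) = 1) by (rewrite <- Rpow_mult_distr; replace (-1 * -1) with 1 by ring; apply pow1).
  assert (INR (Factorial.fact (N + 2)) <> 0) by (apply INR_fact_neq_0).
  assert (2 ^ (N + 2) <> 0) by (apply pow_nonzero; lra).
  assert (E2 : ((-1) ^ (N + 2)) ^ 2 = 1) by (rewrite <- E1; ring).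
  field_simplify. rewrite E2. f_equal; ring.
  all: try (apply Rgt_not_eq; exact HP). all: try split; try (apply Rgt_not_eq; exact HP); try assumption. all: split; assumption.
Qed.

Lemma exd_sum (F : nat -> R -> R) N y : (forall l y, ex_derive (F l) y) ->
  ex_derive (fun y => sum_f_R0 (fun l => F l y) N) y.
Proof.
  intros H; induction N.
  - simpl. apply H.
  - simpl. apply (ex_derive_plus (fun y => sum_f_R0 (fun l => F l y) N) (F (S N))); auto.
Qed.

Lemma Jp_exd N a y : ex_derive (Jp N a) y.
Proof.
  unfold Jp. apply (ex_derive_mult (fun y => (1 + y) ^ 2 / (2 ^ (N + 2) * INR (Factorial.fact (N + 2))))).
  auto_derive; auto.
  apply exd_sum. intros l u. auto_derive; auto.
Qed.

Lemma Jp_cont N a y : continuity_pt (Jp N a) y.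
Proof. apply continuity_pt_filterlim. apply (ex_derive_continuous (Jp N a)). apply Jp_exd. Qed.

Lemma inv_seq : is_lim_seq (fun k => / INR (k + 2)) 0.
Proof.
  assert (H : is_lim_seq (fun k => INR (k + 2)) p_infty) by (apply (is_lim_seq_incr_n INR 2); apply is_lim_seq_INR).
  apply is_lim_seq_inv in H; [|discriminate]. exact H.
Qed.

Lemma inv_pos k : 0 < / INR (k + 2) < 1.
Proof. assert (1 < INR (k + 2)) by (rewrite plus_INR; simpl; pose proof (pos_INR k); lra).
  split. apply Rinv_0_lt_compat; lra. rewrite <- Rinv_1. apply Rinv_lt_contravar; lra. Qed.

Lemma jacP_eq N a y : 0 < a -> -1 <= y <= 1 -> jacobiP (N + 2) a (-2) y = Jp N a y.
Proof.
  intros Ha Hy. unfold jacobiP.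
  destruct (Rlt_dec (-1) y) as [H1|H1].
  - destruct (Rlt_dec y 1) as [H2|H2].
    + apply rod_eq; auto.
    + destruct (Req_EM_T y 1) as [->|H3]; [|lra].
      rewrite (Lim_seq_ext _ (fun k => Jp N a (1 - / INR (k + 2)))).
      * rewrite (is_lim_seq_unique _ (Jp N a 1)). reflexivity.
        apply (is_lim_seq_continuous (Jp N a)). apply Jp_cont.
        assert (L : is_lim_seq (fun k => 1 - / INR (k + 2)) (1 - 0)).
        { apply is_lim_seq_minus'. apply is_lim_seq_const. apply inv_seq. }
        rewrite Rminus_0_r in L. exact L.
      * intros k. pose proof (inv_pos k). apply rod_eq; auto; lra.
  - destruct (Req_EM_T y (-1)) as [->|H3]; [|lra].
    rewrite (Lim_seq_ext _ (fun k => Jp N a (-1 + / INR (k + 2)))).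
    * rewrite (is_lim_seq_unique _ (Jp N a (-1))). reflexivity.
      apply (is_lim_seq_continuous (Jp N a)). apply Jp_cont.
      assert (L : is_lim_seq (fun k => -1 + / INR (k + 2)) (-1 + 0)).
      { apply is_lim_seq_plus'. apply is_lim_seq_const. apply inv_seq. }
      rewrite Rplus_0_r in L. exact L.
    * intros k. pose proof (inv_pos k). apply rod_eq; auto; lra.
Qed.

Definition w (N : nat) (a : R) (l : nat) : R := cb N l * (-1) ^ l * rp (a + INR l) (N + 2).
Definition wm (f : nat -> R) (k : nat) : R := match k with O => 0 | S k' => f k' end.

Definition Gpoly (N : nat) (a x : R) : R :=
  / INR (Factorial.fact (N + 2)) *
  sum_f_R0 (fun l => w N a l * (x ^ (2 * l) - 2 * x ^ (2 * l + 2) + x ^ (2 * l + 4))) N.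

Lemma Jp_x N a x : Jp N a (1 - 2 * x ^ 2) = Gpoly N a x.
Proof.
  unfold Jp, Gpoly. rewrite <- !sum_scal. apply sum_ext. intros l Hl. unfold w.
  assert (E : 2 ^ (N - l) * 2 ^ l = 2 ^ N) by (rewrite <- pow_add; f_equal; lia).
  replace (1 - (1 - 2 * x ^ 2)) with (2 * x ^ 2) by ring.
  rewrite Rpow_mult_distr, <- pow_mult.
  replace (x ^ (2 * l + 2)) with (x ^ (2 * l) * x ^ 2) by (rewrite pow_add; auto).
  replace (x ^ (2 * l + 4)) with (x ^ (2 * l) * x ^ 4) by (rewrite pow_add; auto).
  replace (2 ^ (N + 2)) with (2 ^ N * 4) by (rewrite pow_add; simpl; ring).
  replace (x ^ (2 * l)) with (x ^ (l * 2)) by (f_equal; lia).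
  assert (INR (Factorial.fact (N + 2)) <> 0) by apply INR_fact_neq_0.
  assert (2 ^ N <> 0) by (apply pow_nonzero; lra).
  replace (2 ^ N) with (2 ^ (N - l) * 2 ^ l) by exact E.
  assert (2 ^ (N - l) <> 0) by (apply pow_nonzero; lra).
  assert (2 ^ l <> 0) by (apply pow_nonzero; lra).
  field. repeat split; auto.
Qed.

Lemma reindex (f phi psi : nat -> R) N :
  (forall l, (N < l)%nat -> f l = 0) -> psi O = 0 -> (forall k, psi (S k) = phi k) ->
  sum_f_R0 (fun k => (f (S k) - 2 * f k + wm f k) * phi k) (S N) =
  sum_f_R0 (fun l => f l * (psi l - 2 * phi l + phi (S l))) N.
Proof.
  intros Hf H0 HS.
  rewrite (sum_ext _ (fun k => (f (S k) * psi (S k) - 2 * (f k * phi k)) + wm f k * phi k))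
    by (intros; rewrite HS; ring).
  rewrite sum_plus', sum_minus', sum_scal.
  rewrite (sum_ext (fun l => f l * (psi l - 2 * phi l + phi (S l)))
            (fun l => (f l * psi l - 2 * (f l * phi l)) + f l * phi (S l))) by (intros; ring).
  rewrite sum_plus', sum_minus', sum_scal.
  assert (A1 : sum_f_R0 (fun k => f (S k) * psi (S k)) (S N) = sum_f_R0 (fun l => f l * psi l) N).
  { pose proof (sum_shift (fun l => f l * psi l) (S N)) as E.
    change (sum_f_R0 (fun l => f l * psi l) (S (S N))) with
      (sum_f_R0 (fun l => f l * psi l) N + f (S N) * psi (S N) + f (S (S N)) * psi (S (S N))) in E.
    rewrite !Hf in E by lia. rewrite H0 in E. lra. }
  assert (A2 : sum_f_R0 (fun k => f k * phi k) (S N) = sum_f_R0 (fun l => f l * phi l) N).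
  { simpl. rewrite Hf by lia. ring. }
  assert (A3 : sum_f_R0 (fun k => wm f k * phi k) (S N) = sum_f_R0 (fun l => f l * phi (S l)) N).
  { rewrite sum_shift. simpl wm. ring. }
  rewrite A1, A2, A3. ring.
Qed.

Lemma w_gt N a l : (N < l)%nat -> w N a l = 0.
Proof. intros H; unfold w; rewrite cb_gt; auto; ring. Qed.

Definition cc (N : nat) (a : R) (k : nat) : R :=
  / INR (Factorial.fact (N + 2)) * (w N a (S k) - 2 * w N a k + wm (w N a) k) * INR (2 * k + 2).

Lemma is_derive_sum (F : nat -> R -> R) (F' : nat -> R) N x :
  (forall l, (l <= N)%nat -> is_derive (F l) x (F' l)) ->
  is_derive (fun y => sum_f_R0 (fun l => F l y) N) x (sum_f_R0 F' N).
Proof.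
  intros H; induction N.
  - simpl; apply H; auto.
  - simpl. apply (is_derive_plus (fun y => sum_f_R0 (fun l => F l y) N) (F (S N))); auto.
Qed.

Lemma Gpoly_derive N a x :
  is_derive (Gpoly N a) x (sum_f_R0 (fun k => cc N a k * x ^ (2 * k + 1)) (S N)).
Proof.
  unfold Gpoly.
  set (phi := fun k : nat => INR (2 * k + 2) * x ^ (2 * k + 1)).
  set (psi := fun l : nat => INR (2 * l) * x ^ Nat.pred (2 * l)).
  replace (sum_f_R0 (fun k => cc N a k * x ^ (2 * k + 1)) (S N)) with
    (/ INR (Factorial.fact (N + 2)) * sum_f_R0 (fun l => w N a l * (psi l - 2 * phi l + phi (S l))) N).
  2:{ rewrite <- reindex. rewrite <- sum_scal. apply sum_ext; intros; unfold cc, phi. ring.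
      apply w_gt. unfold psi; simpl; ring. intros k; unfold psi, phi. f_equal. f_equal; lia. f_equal; lia. }
  apply is_derive_scal. apply is_derive_sum. intros l _.
  unfold psi, phi. auto_derive; auto.
  replace (l + (l + 0))%nat with (2 * l)%nat by lia.
  replace (Nat.pred (2 * l + 2)) with (2 * l + 1)%nat by lia.
  replace (Nat.pred (2 * l + 4)) with (2 * l + 3)%nat by lia.
  replace (2 * S l + 1)%nat with (2 * l + 3)%nat by lia.
  replace (2 * S l + 2)%nat with (2 * l + 4)%nat by lia.
  ring.
Qed.

Definition Wp (N : nat) (a u : R) : R := sum_f_R0 (fun l => w N a l * u ^ (2 * l)) N.

Lemma Gpoly_fact N a u : Gpoly N a u = / INR (Factorial.fact (N + 2)) * ((1 - u ^ 2) ^ 2 * Wp N a u).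
Proof.
  unfold Gpoly, Wp. f_equal. rewrite <- sum_scal. apply sum_ext. intros l _.
  rewrite !pow_add. ring.
Qed.

Lemma Wp_exd N a u : ex_derive (Wp N a) u.
Proof. unfold Wp. apply exd_sum. intros l y. auto_derive; auto. Qed.

Lemma Gpoly_d1 N a : is_derive (Gpoly N a) 1 0.
Proof.
  destruct (Wp_exd N a 1) as [dW HW].
  apply (is_derive_ext (fun u => / INR (Factorial.fact (N + 2)) * ((1 - u ^ 2) ^ 2 * Wp N a u))).
  { intros t; symmetry; apply Gpoly_fact. }
  replace 0 with (/ INR (Factorial.fact (N + 2)) * ((2 * (1 - 1 ^ 2) * (- 2 * 1)) * Wp N a 1 + (1 - 1 ^ 2) ^ 2 * dW)) by ring.
  apply is_derive_scal. apply (is_derive_mult (fun u => (1 - u ^ 2) ^ 2) (Wp N a)); auto.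
  auto_derive; auto. ring. intros; apply Rmult_comm.
Qed.

Lemma sum_cc_1 N a : sum_f_R0 (fun k => cc N a k * 1 ^ (2 * k + 1)) (S N) = 0.
Proof. rewrite <- (is_derive_unique _ _ _ (Gpoly_derive N a 1)). exact (is_derive_unique _ _ _ (Gpoly_d1 N a)). Qed.

Definition Kc (d q : nat) : R :=
  Gamma ((INR d + INR q) / 2) / (Rpower PI (INR d / 2) * Gamma (INR q / 2)).

Lemma q2 N : ((2 * N + 2) / 2 = S N)%nat.
Proof. replace (2 * N + 2)%nat with (S N * 2)%nat by lia. apply Nat.div_mul. lia. Qed.

Lemma ind1 x : x <= 1 -> ind_le1 x = 1.
Proof. unfold ind_le1; destruct Rle_dec; lra. Qed.
Lemma ind0 x : 1 < x -> ind_le1 x = 0.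
Proof. unfold ind_le1; destruct Rle_dec; lra. Qed.

Lemma GB_eq d N x : (1 <= d)%nat -> -1 <= x <= 1 ->
  GB d (2 * N + 2) x = Kc d (2 * N + 2) * Gpoly N (INR d / 2) x.
Proof.
  intros Hd Hx. unfold GB. rewrite q2. replace (S N + 1)%nat with (N + 2)%nat by lia.
  rewrite ind1 by lra. rewrite jacP_eq.
  - rewrite Jp_x. unfold Kc. ring.
  - assert (1 <= INR d) by (apply (le_INR 1); auto). lra.
  - assert (0 <= x ^ 2 <= 1) by (simpl; nra). lra.
Qed.

Lemma GB_gt1 d q x : 1 < x -> GB d q x = 0.
Proof. intros H; unfold GB; rewrite ind0; auto; ring. Qed.

Definition cfin (d N : nat) (k : nat) : R := Kc d (2 * N + 2) * cc N (INR d / 2) k.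

Lemma podd_eq d N x : podd (2 * N + 2) (cfin d N) x =
  Kc d (2 * N + 2) * sum_f_R0 (fun k => cc N (INR d / 2) k * x ^ (2 * k + 1)) (S N).
Proof. unfold podd. rewrite q2, <- sum_scal. apply sum_ext; intros; unfold cfin; ring. Qed.

Lemma deriv_at_1 (g Rf : R -> R) :
  (forall u, -1 < u <= 1 -> g u = (1 - u) ^ 2 * Rf u) -> (forall u, 1 < u -> g u = 0) ->
  continuity_pt Rf 1 -> is_derive g 1 0.
Proof.
  intros H1 H2 Hc. apply is_derive_Reals. intros eps Heps.
  destruct (Hc 1 Rlt_0_1) as [al [Hal Hu]].
  set (B := Rabs (Rf 1) + 1).
  assert (HB : 0 < B) by (unfold B; pose proof (Rabs_pos (Rf 1)); lra).
  assert (Hd : 0 < Rmin al (Rmin 1 (eps / B))) by (repeat apply Rmin_pos; try lra; apply Rdiv_lt_0_compat; lra).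
  exists (mkposreal _ Hd). intros h Hh0 Hh. simpl in Hh.
  assert (Ha : Rabs h < al) by (eapply Rlt_le_trans; [exact Hh|apply Rmin_l]).
  assert (H1' : Rabs h < 1) by (eapply Rlt_le_trans; [exact Hh|eapply Rle_trans; [apply Rmin_r|apply Rmin_l]]).
  assert (He : Rabs h < eps / B) by (eapply Rlt_le_trans; [exact Hh|eapply Rle_trans; [apply Rmin_r|apply Rmin_r]]).
  rewrite (H1 1) by lra. replace ((1 - 1) ^ 2 * Rf 1) with 0 by ring.
  apply Rabs_def2 in H1'.
  destruct (Rle_dec h 0) as [Hn|Hp].
  - rewrite (H1 (1 + h)) by lra.
    replace (((1 - (1 + h)) ^ 2 * Rf (1 + h) - 0) / h - 0) with (h * Rf (1 + h)) by (field; auto).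
    assert (HR : Rabs (Rf (1 + h)) <= B).
    { assert (Rabs (Rf (1 + h) - Rf 1) < 1).
      { assert (Hr : R_dist (1 + h) 1 < al) by (unfold R_dist; replace (1 + h - 1) with h by ring; auto).
        assert (Hne : 1 <> 1 + h) by lra.
        assert (Hx := Hu (1 + h) (conj (conj I Hne) Hr)). exact Hx. }
      unfold B. pose proof (Rabs_triang_inv (Rf (1 + h)) (Rf 1)). lra. }
    rewrite Rabs_mult. apply Rle_lt_trans with (Rabs h * B).
    apply Rmult_le_compat_l; auto; apply Rabs_pos.
    apply (Rmult_lt_compat_r B) in He; auto. replace (eps / B * B) with eps in He by (field; lra). lra.
  - rewrite H2 by lra. replace ((0 - 0) / h - 0) with 0 by (field; auto). rewrite Rabs_R0; lra.
Qed.

Lemma loc_gt1 x : 1 < x -> locally x (fun u => 1 < u).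
Proof. intros H. assert (H' : 0 < x - 1) by lra. exists (mkposreal _ H'). intros u Bu.
  assert (B : Rabs (u - x) < x - 1) by exact Bu. apply Rabs_def2 in B. simpl in B. lra. Qed.

Lemma GB_deriv d N x : (1 <= d)%nat -> 0 <= x ->
  is_derive (GB d (2 * N + 2)) x (pbar (2 * N + 2) (cfin d N) x).
Proof.
  intros Hd Hx. unfold pbar. rewrite podd_eq.
  destruct (Rlt_le_dec x 1) as [H1|H1]; [|destruct (Req_dec x 1) as [He|H2]].
  - rewrite ind1 by lra. rewrite Rmult_1_r.
    apply is_derive_ext_loc with (fun u => Kc d (2 * N + 2) * Gpoly N (INR d / 2) u).
    + generalize (loc_int x ltac:(lra)). apply filter_imp. intros u Hu.
      symmetry; apply GB_eq; auto; lra.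
    + apply is_derive_scal. apply Gpoly_derive.
  - subst x. rewrite ind1 by lra. rewrite sum_cc_1. replace (Kc d (2 * N + 2) * 0 * 1) with 0 by ring.
    apply deriv_at_1 with (fun u => Kc d (2 * N + 2) * / INR (Factorial.fact (N + 2)) * ((1 + u) ^ 2 * Wp N (INR d / 2) u)).
    + intros u Hu. rewrite GB_eq by (auto; lra). rewrite Gpoly_fact. ring.
    + intros u Hu; apply GB_gt1; auto.
    + apply continuity_pt_filterlim.
      apply (ex_derive_continuous (fun u => Kc d (2 * N + 2) * / INR (Factorial.fact (N + 2)) * ((1 + u) ^ 2 * Wp N (INR d / 2) u))).
      apply exd_scal. apply (exd_mult (fun u => (1 + u) ^ 2)). auto_derive; auto. apply Wp_exd.
  - rewrite ind0 by lra. rewrite Rmult_0_r.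
    apply is_derive_ext_loc with (fun _ => 0).
    + generalize (loc_gt1 x ltac:(lra)). apply filter_imp. intros u Hu. symmetry; apply GB_gt1; auto.
    + auto_derive; auto.
Qed.

Lemma is_RInt_sum (F : nat -> R -> R) (v : nat -> R) N a b :
  (forall l, (l <= N)%nat -> is_RInt (F l) a b (v l)) ->
  is_RInt (fun x => sum_f_R0 (fun l => F l x) N) a b (sum_f_R0 v N).
Proof.
  intros H; induction N.
  - simpl; apply H; auto.
  - simpl. apply (is_RInt_plus (V:=R_NormedModule) (fun x => sum_f_R0 (fun l => F l x) N) (F (S N))); auto.
Qed.

Lemma is_RInt_mono c n : is_RInt (fun x => c * x ^ n) 0 1 (c / INR (n + 1)).
Proof.
  assert (Hn : 0 < INR (n + 1)) by (apply lt_0_INR; lia).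
  replace (c / INR (n + 1)) with (c * 1 ^ (n + 1) / INR (n + 1) - c * 0 ^ (n + 1) / INR (n + 1)).
  2:{ rewrite pow1, pow_i by lia. field. lra. }
  apply (is_RInt_derive (fun x => c * x ^ (n + 1) / INR (n + 1))).
  - intros x _. auto_derive; auto. replace (Nat.pred (n + 1)) with n by lia. field. lra.
  - intros x _. apply (ex_derive_continuous (fun x => c * x ^ n)). auto_derive; auto.
Qed.

Lemma int_pbar (p q : nat) (c : nat -> R) :
  is_RInt_gen (fun x => x ^ p * pbar q c x) (at_point 0) (Rbar_locally p_infty)
    (sum_f_R0 (fun k => c k / INR (p + (2 * k + 1) + 1)) (q / 2)).
Proof.
  set (V := sum_f_R0 (fun k => c k / INR (p + (2 * k + 1) + 1)) (q / 2)).
  assert (H01 : is_RInt (fun x => x ^ p * pbar q c x) 0 1 V).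
  { apply is_RInt_ext with (fun x => sum_f_R0 (fun k => c k * x ^ (p + (2 * k + 1))) (q / 2)).
    - intros x Hx. rewrite Rmin_left, Rmax_right in Hx by lra.
      unfold pbar, podd. rewrite ind1 by lra. rewrite Rmult_1_r, Rmult_comm, sum_mult_r.
      apply sum_ext; intros; rewrite pow_add; ring.
    - apply is_RInt_sum. intros l _. apply is_RInt_mono. }
  assert (Hb : forall b, 1 < b -> is_RInt (fun x => x ^ p * pbar q c x) 0 b V).
  { intros b Hb. replace V with (plus V 0) by (unfold plus; simpl; ring).
    apply (is_RInt_Chasles (V:=R_NormedModule)) with 1; auto.
    apply is_RInt_ext with (fun _ => 0).
    - intros x Hx. rewrite Rmin_left, Rmax_right in Hx by lra.
      unfold pbar. rewrite ind0 by lra. change (@eq R 0 (x ^ p * (podd q c x * 0))). ring.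
    - assert (HC := is_RInt_const (V:=R_NormedModule) 1 b 0). rewrite scal_R, Rmult_0_r in HC. exact HC. }
  apply filterlimi_lim_ext_loc with (fun _ => V).
  - apply (Filter_prod _ _ _ (fun x => x = 0) (fun y => 1 < y)); [reflexivity|exists 1; auto|].
    intros x y -> Hy. simpl. apply Hb; auto.
  - apply filterlim_const.
Qed.

Lemma pow_le1 u j : 0 <= u <= 1 -> u ^ j <= 1.
Proof. intros H; induction j; simpl. lra. assert (0 <= u ^ j) by (apply pow_le; lra). nra. Qed.

Lemma sum_abs_bound (s : nat -> R) N u : 0 <= u <= 1 ->
  Rabs (sum_f_R0 (fun j => s j * u ^ j) N) <= sum_f_R0 (fun j => Rabs (s j)) N.
Proof.
  intros Hu.
  assert (Hp : forall j, Rabs (s j * u ^ j) <= Rabs (s j)).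
  { intros j. rewrite Rabs_mult. rewrite <- (Rmult_1_r (Rabs (s j))) at 2.
    apply Rmult_le_compat_l. apply Rabs_pos. rewrite Rabs_pos_eq by (apply pow_le; lra).
    apply pow_le1; lra. }
  induction N; simpl. apply Hp.
  eapply Rle_trans. apply Rabs_triang. apply Rplus_le_compat; auto.
Qed.

Lemma polyzero N (t : nat -> R) :
  (forall u, 0 < u < 1 -> sum_f_R0 (fun j => t j * u ^ j) N = 0) -> forall j, (j <= N)%nat -> t j = 0.
Proof.
  revert t; induction N; intros t H j Hj.
  - replace j with O by lia. specialize (H (1/2) ltac:(lra)). simpl in H. lra.
  - assert (Ht0 : t O = 0).
    { set (M := sum_f_R0 (fun j => Rabs (t (S j))) N).
      assert (HM : 0 <= M) by (apply cond_pos_sum; intros; apply Rabs_pos).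
      assert (Hb : forall u, 0 < u < 1 -> Rabs (t O) <= u * M).
      { intros u Hu. specialize (H u Hu). rewrite sum_shift in H.
        rewrite (sum_ext _ (fun j => u * (t (S j) * u ^ j))) in H by (intros; simpl; ring).
        rewrite sum_scal in H. simpl in H. replace (t O) with (- (u * sum_f_R0 (fun j => t (S j) * u ^ j) N)) by lra.
        rewrite Rabs_Ropp, Rabs_mult, Rabs_pos_eq by lra.
        apply Rmult_le_compat_l; [lra|]. apply sum_abs_bound; lra. }
      destruct (Req_dec (t O) 0) as [E|E]; auto. exfalso.
      assert (Ha : 0 < Rabs (t O)) by (apply Rabs_pos_lt; auto).
      set (u := Rmin (1/2) (Rabs (t O) / (2 * (M + 1)))).
      assert (Hu : 0 < u < 1).
      { unfold u. split. apply Rmin_pos. lra. apply Rdiv_lt_0_compat; lra.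
        pose proof (Rmin_l (1/2) (Rabs (t O) / (2 * (M + 1)))). lra. }
      specialize (Hb u Hu).
      assert (u * M <= Rabs (t O) / 2).
      { apply Rle_trans with (Rabs (t O) / (2 * (M + 1)) * (M + 1)).
        apply Rmult_le_compat; try lra. apply Rmin_r.
        right; field; lra. }
      lra. }
    destruct j. auto.
    apply (IHN (fun j => t (S j))); [|lia].
    intros u Hu. specialize (H u Hu). rewrite sum_shift, Ht0 in H.
    rewrite (sum_ext _ (fun j => u * (t (S j) * u ^ j))) in H by (intros; simpl; ring).
    rewrite sum_scal in H. simpl in H.
    apply (Rmult_eq_reg_l u); [lra|lra].
Qed.

Lemma pos_int_zero (f : R -> R) :
  (forall x, 0 <= x <= 1 -> continuous f x) -> (forall x, 0 < x < 1 -> 0 <= f x) ->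
  is_RInt f 0 1 0 -> forall x, 0 < x < 1 -> f x = 0.
Proof.
  intros Hc Hp HI x0 Hx0.
  destruct (Rle_lt_or_eq_dec 0 (f x0) (Hp x0 Hx0)) as [Hlt|]; [|auto]. exfalso.
  assert (He : 0 < f x0 / 2) by lra.
  destruct (proj1 (filterlim_locally (F:=locally x0) f (f x0)) (Hc x0 ltac:(lra)) (mkposreal _ He)) as [dl Hdl].
  set (dd := Rmin (dl / 2) (Rmin (x0 / 2) ((1 - x0) / 2))).
  assert (Hdd : 0 < dd) by (unfold dd; repeat apply Rmin_pos; try lra; destruct dl; simpl; lra).
  assert (Hdd1 : dd <= dl / 2) by apply Rmin_l.
  assert (Hdd2 : dd <= x0 / 2) by (eapply Rle_trans; [apply Rmin_r|apply Rmin_l]).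
  assert (Hdd3 : dd <= (1 - x0) / 2) by (eapply Rle_trans; [apply Rmin_r|apply Rmin_r]).
  set (a := x0 - dd). set (b := x0 + dd).
  assert (Hex : forall u v, 0 <= u <= 1 -> 0 <= v <= 1 -> ex_RInt f u v).
  { intros u v Hu Hv. apply exRInt_cont. intros z Hz. apply Hc.
    split; [eapply Rle_trans; [|apply Hz]|eapply Rle_trans; [apply Hz|]].
    unfold Rmin; destruct Rle_dec; lra. unfold Rmax; destruct Rle_dec; lra. }
  assert (I1 : 0 <= RInt f 0 a) by (apply RInt_ge_0; [unfold a; lra|apply Hex; unfold a; lra|intros; apply Hp; unfold a in *; lra]).
  assert (I3 : 0 <= RInt f b 1) by (apply RInt_ge_0; [unfold b; lra|apply Hex; unfold b; lra|intros; apply Hp; unfold b in *; lra]).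
  assert (I2 : 0 < RInt f a b).
  { apply RInt_gt_0. unfold a, b; lra.
    - intros x Hx. assert (Bx : ball x0 dl x).
      { apply ball_R. apply Rabs_def1; unfold a, b in Hx; lra. }
      specialize (Hdl x Bx). assert (B2 : Rabs (f x - f x0) < f x0 / 2) by exact Hdl.
      apply Rabs_def2 in B2. lra.
    - intros x Hx. apply Hc. unfold a, b in Hx; lra. }
  assert (C1 := RInt_Chasles_R f 0 a b (Hex 0 a ltac:(lra) ltac:(unfold a; lra)) (Hex a b ltac:(unfold a; lra) ltac:(unfold b; lra))).
  assert (C2 := RInt_Chasles_R f 0 b 1 (Hex 0 b ltac:(lra) ltac:(unfold b; lra)) (Hex b 1 ltac:(unfold b; lra) ltac:(lra))).
  rewrite (is_RInt_unique _ _ _ _ HI) in C2. lra.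
Qed.

Definition tauf (dl : nat -> R) (N k : nat) : R :=
  if Compare_dec.le_lt_dec k N then sum_f_R0 dl k else 0.

Lemma tau_diff dl N : sum_f_R0 dl (S N) = 0 ->
  forall k, (k <= S N)%nat -> dl k = tauf dl N k - wm (tauf dl N) k.
Proof.
  intros Hs k Hk. unfold tauf. destruct k as [|k]; simpl wm.
  - destruct (Compare_dec.le_lt_dec 0 N); [simpl; ring|lia].
  - destruct (Compare_dec.le_lt_dec (S k) N); destruct (Compare_dec.le_lt_dec k N); try lia.
    + simpl. ring.
    + replace k with N in * by lia. simpl in Hs. lra.
Qed.

Lemma sbp (tau g : nat -> R) N : tau (S N) = 0 ->
  sum_f_R0 (fun k => (tau k - wm tau k) * g k) (S N) = sum_f_R0 (fun k => tau k * (g k - g (S k))) N.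
Proof.
  intros H. rewrite (sum_ext _ (fun k => tau k * g k - wm tau k * g k)) by (intros; ring).
  rewrite sum_minus'.
  rewrite (sum_ext (fun k => tau k * (g k - g (S k))) (fun k => tau k * g k - tau k * g (S k))) by (intros; ring).
  rewrite sum_minus'.
  assert (A2 : sum_f_R0 (fun k => tau k * g k) (S N) = sum_f_R0 (fun l => tau l * g l) N).
  { simpl. rewrite H. ring. }
  assert (A3 : sum_f_R0 (fun k => wm tau k * g k) (S N) = sum_f_R0 (fun l => tau l * g (S l)) N).
  { rewrite sum_shift. simpl wm. ring. }
  rewrite A2, A3. ring.
Qed.

Lemma sum_prod (f g : nat -> R) N M :
  sum_f_R0 f N * sum_f_R0 g M = sum_f_R0 (fun j => sum_f_R0 (fun k => f j * g k) M) N.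
Proof.
  rewrite sum_mult_r. apply sum_ext. intros j _. rewrite <- sum_scal.
  apply sum_ext; intros; ring.
Qed.

Lemma sum_zero N : sum_f_R0 (fun _ => 0) N = 0.
Proof. induction N; simpl; lra. Qed.

Lemma uniq_core d N (dl : nat -> R) :
  (forall j, (j <= N)%nat ->
     sum_f_R0 (fun k => dl k / (INR d + 2 * INR j + 2 * INR k + 2)) (S N) = 0) ->
  sum_f_R0 dl (S N) = 0 -> forall k, (k <= S N)%nat -> dl k = 0.
Proof.
  intros Hm Hs.
  set (tau := tauf dl N).
  assert (HtS : tau (S N) = 0) by (unfold tau, tauf; destruct Compare_dec.le_lt_dec; [lia|auto]).
  assert (Hd0 : 0 <= INR d) by apply pos_INR.
  set (h := fun j k : nat => / (INR d + 2 * INR j + 2 * INR k + 2) - / (INR d + 2 * INR j + 2 * INR k + 4)).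
  assert (Hi : forall j, (j <= N)%nat -> sum_f_R0 (fun k => tau k * h j k) N = 0).
  { intros j Hj. rewrite <- (Hm j Hj). symmetry.
    rewrite (sum_ext (fun k => dl k / (INR d + 2 * INR j + 2 * INR k + 2)) (fun k => (tau k - wm tau k) * / (INR d + 2 * INR j + 2 * INR k + 2))).
    2:{ intros k Hk. unfold Rdiv. rewrite (tau_diff dl N Hs k Hk). reflexivity. }
    rewrite sbp by auto. apply sum_ext. intros k _. unfold h. rewrite S_INR.
    replace (INR d + 2 * INR j + 2 * (INR k + 1) + 2) with (INR d + 2 * INR j + 2 * INR k + 4) by ring.
    reflexivity. }
  set (P := fun x => sum_f_R0 (fun j => tau j * x ^ (2 * j)) N).
  set (Q := sum_f_R0 (fun j => tau j * sum_f_R0 (fun k => tau k * h j k) N) N).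
  assert (HQ : Q = 0).
  { unfold Q. rewrite (sum_ext (fun j => tau j * sum_f_R0 (fun k => tau k * h j k) N) (fun _ => 0) N)
      by (intros j Hj; rewrite Hi; auto; ring). apply sum_zero. }
  assert (HI : is_RInt (fun x => x ^ (d + 1) * (1 - x ^ 2) * (P x) ^ 2) 0 1 Q).
  { apply is_RInt_ext with (fun x => sum_f_R0 (fun j => sum_f_R0 (fun k =>
        tau j * tau k * x ^ (d + 1 + 2 * j + 2 * k) - tau j * tau k * x ^ (d + 3 + 2 * j + 2 * k)) N) N).
    - intros x _. change (@eq R (sum_f_R0 (fun j => sum_f_R0 (fun k =>
        tau j * tau k * x ^ (d + 1 + 2 * j + 2 * k) - tau j * tau k * x ^ (d + 3 + 2 * j + 2 * k)) N) N)
        (x ^ (d + 1) * (1 - x ^ 2) * P x ^ 2)).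
      replace (P x ^ 2) with (P x * P x) by ring. unfold P.
      rewrite sum_prod, Rmult_comm, sum_mult_r. symmetry.
      apply sum_ext; intros j _. rewrite sum_mult_r. apply sum_ext; intros k _.
      rewrite !pow_add. replace (x ^ 3) with (x ^ 1 * x ^ 2) by (simpl; ring).
      rewrite !pow_mult. ring.
    - unfold Q. apply is_RInt_sum. intros j _.
      replace (tau j * sum_f_R0 (fun k => tau k * h j k) N) with
        (sum_f_R0 (fun k => tau j * tau k / INR (d + 1 + 2 * j + 2 * k + 1) - tau j * tau k / INR (d + 3 + 2 * j + 2 * k + 1)) N).
      + apply is_RInt_sum. intros k _.
        apply (is_RInt_minus (V:=R_NormedModule) (fun x => tau j * tau k * x ^ (d + 1 + 2 * j + 2 * k))
                 (fun x => tau j * tau k * x ^ (d + 3 + 2 * j + 2 * k))); apply is_RInt_mono.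
      + rewrite <- sum_scal. apply sum_ext; intros k _. unfold h.
        rewrite !plus_INR, !mult_INR. simpl INR.
        pose proof (pos_INR j); pose proof (pos_INR k).
        field. split; lra. }
  rewrite HQ in HI.
  assert (Hz : forall x, 0 < x < 1 -> x ^ (d + 1) * (1 - x ^ 2) * P x ^ 2 = 0).
  { apply pos_int_zero; auto.
    - intros x _. apply (ex_derive_continuous (fun x => x ^ (d + 1) * (1 - x ^ 2) * P x ^ 2)).
      apply (exd_mult (fun x => x ^ (d + 1) * (1 - x ^ 2))). auto_derive; auto.
      apply (ex_derive_pow P 2 x). unfold P; apply exd_sum; intros; auto_derive; auto.
    - intros x Hx. apply Rmult_le_pos. apply Rmult_le_pos. apply pow_le; lra.
      assert (x ^ 2 < 1) by (simpl; nra). lra. apply pow2_ge_0. }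
  assert (HP : forall u, 0 < u < 1 -> sum_f_R0 (fun j => tau j * u ^ j) N = 0).
  { intros u Hu. set (x := sqrt u).
    assert (Hx : 0 < x < 1).
    { unfold x. split. apply sqrt_lt_R0; lra. rewrite <- sqrt_1. apply sqrt_lt_1_alt; lra. }
    assert (Hx2 : x ^ 2 = u) by (unfold x; rewrite <- Rsqr_pow2; apply Rsqr_sqrt; lra).
    specialize (Hz x Hx).
    assert (Hpos : 0 < x ^ (d + 1) * (1 - x ^ 2)).
    { apply Rmult_lt_0_compat. apply pow_lt; lra. assert (x ^ 2 < 1) by (simpl; nra). lra. }
    assert (P x ^ 2 = 0).
    { apply (Rmult_eq_reg_l (x ^ (d + 1) * (1 - x ^ 2))); lra. }
    assert (P x = 0) by (simpl in *; nra).
    unfold P in H0. rewrite <- H0. apply sum_ext; intros j _. rewrite pow_mult, Hx2. ring. }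
  assert (Ht : forall j, (j <= N)%nat -> tau j = 0) by (apply polyzero; auto).
  intros k Hk. rewrite (tau_diff dl N Hs k Hk). fold tau.
  destruct k; simpl wm.
  - rewrite Ht by lia. ring.
  - destruct (Compare_dec.le_lt_dec (S k) N).
    + rewrite !Ht by lia. ring.
    + replace (S k) with (S N) by lia. rewrite HtS, Ht by lia. ring.
Qed.

Definition GammaP (s : R) : Prop := is_RInt_gen (fG s) (at_right 0) (Rbar_locally p_infty) (Gamma s).

Lemma GammaP_step s : 0 < s -> GammaP s -> GammaP (s + 1) /\ Gamma (s + 1) = s * Gamma s.
Proof.
  intros Hs H. assert (H1 := gamma_step s (Gamma s) Hs H).
  assert (E : Gamma (s + 1) = s * Gamma s).
  { unfold Gamma at 1. apply (is_RInt_gen_unique (V:=R_CompleteNormedModule)). exact H1. }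
  split; auto. unfold GammaP. rewrite E. exact H1.
Qed.

Lemma GammaP_k s : 0 < s -> GammaP s -> forall k, GammaP (s + INR k).
Proof.
  intros Hs H k; induction k.
  - simpl. rewrite Rplus_0_r. auto.
  - rewrite S_INR, <- Rplus_assoc. apply GammaP_step; auto. pose proof (pos_INR k); lra.
Qed.

Lemma Gamma_shift s : 0 < s -> GammaP s -> forall k, Gamma (s + INR (S k)) = Gamma s * (s * rp s k).
Proof.
  intros Hs H k; induction k.
  - simpl. rewrite (proj2 (GammaP_step s Hs H)). ring.
  - rewrite (S_INR (S k)), <- Rplus_assoc.
    rewrite (proj2 (GammaP_step (s + INR (S k)) ltac:(pose proof (pos_INR (S k)); lra) (GammaP_k s Hs H (S k)))).
    rewrite IHk. change (rp s (S k)) with (rp s k * (s + INR (S k))). ring.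
Qed.

Lemma GammaP_1 : GammaP 1.
Proof.
  unfold GammaP. replace (Gamma 1) with 1. apply gamma_one.
  symmetry. unfold Gamma. apply (is_RInt_gen_unique (V:=R_CompleteNormedModule)). apply gamma_one.
Qed.

Lemma Gamma_1 : Gamma 1 = 1.
Proof. unfold Gamma. apply (is_RInt_gen_unique (V:=R_CompleteNormedModule)). apply gamma_one. Qed.

Lemma rp1_fact k : rp 1 k = INR (Factorial.fact (S k)).
Proof.
  induction k. simpl; ring.
  change (rp 1 (S k)) with (rp 1 k * (1 + INR (S k))). rewrite IHk.
  rewrite (fact_simpl (S k)), mult_INR, (S_INR (S k)). ring.
Qed.

Lemma rp2_fact k : rp 2 k = INR (Factorial.fact (S (S k))) / 2.
Proof.
  induction k. simpl; field.
  change (rp 2 (S k)) with (rp 2 k * (2 + INR (S k))). rewrite IHk.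
  rewrite (fact_simpl (S (S k))), mult_INR, (S_INR (S (S k))), (S_INR (S k)). field.
Qed.

Lemma Gamma_nat N : Gamma (INR (S N)) = INR (Factorial.fact N).
Proof.
  destruct N. simpl. apply Gamma_1.
  replace (INR (S (S N))) with (1 + INR (S N)) by (rewrite (S_INR (S N)); ring).
  rewrite Gamma_shift by (auto; try lra; apply GammaP_1). rewrite Gamma_1, rp1_fact. ring.
Qed.

Lemma GammaP_half : GammaP (1/2).
Proof. unfold GammaP, Gamma. apply gamma_ex. lra. Qed.

Lemma GammaP_a d : (1 <= d)%nat -> GammaP (INR d / 2).
Proof.
  intros Hd. destruct (Nat.Even_or_Odd d) as [[e He]|[e He]]; subst d.
  - destruct e. lia.
    replace (INR (2 * S e) / 2) with (1 + INR e).
    apply GammaP_k; [lra|apply GammaP_1].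
    rewrite mult_INR, (S_INR e). replace (INR 2) with 2 by (simpl; ring). field.
  - replace (INR (2 * e + 1) / 2) with (1/2 + INR e).
    apply GammaP_k; [lra|apply GammaP_half].
    rewrite plus_INR, mult_INR. change (INR 2) with 2. change (INR 1) with 1. field.
Qed.

Lemma fG_pos s t : 0 < t -> 0 < fG s t.
Proof. intros; unfold fG; apply Rmult_lt_0_compat; [apply Rpower_pos|apply exp_pos]. Qed.

Lemma Gamma_pos s : GammaP s -> 0 < Gamma s.
Proof.
  intros H.
  set (h := fun t => if Rle_dec t 1 then 0 else if Rle_dec t 2 then fG s t else 0).
  set (V := RInt (fG s) 1 2).
  assert (HV : 0 < V).
  { apply RInt_gt_0. lra. intros; apply fG_pos; lra. intros; apply fG_cont; lra. }
  assert (Hex : ex_RInt (fG s) 1 2) by (apply exRInt_cont; intros; apply fG_cont;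
     rewrite Rmin_left in *; lra).
  assert (Hh : is_RInt_gen h (at_right 0) (Rbar_locally p_infty) V).
  { apply filterlimi_lim_ext_loc with (fun _ => V).
    - apply (Filter_prod _ _ _ (fun x => 0 < x < 1) (fun y => 2 < y)).
      + exists (mkposreal 1 Rlt_0_1). intros y By Hy.
        assert (B : Rabs (y - 0) < 1) by exact By. apply Rabs_def2 in B. lra.
      + exists 2; auto.
      + intros x y Hx Hy. simpl.
        replace V with (plus 0 (plus V 0)) by (unfold plus; simpl; ring).
        apply (is_RInt_Chasles (V:=R_NormedModule)) with 1.
        * apply is_RInt_ext with (fun _ => 0).
          intros z Hz. rewrite Rmin_left, Rmax_right in Hz by lra. unfold h.
          destruct Rle_dec; lra.
          assert (HC := is_RInt_const (V:=R_NormedModule) x 1 0). rewrite scal_R, Rmult_0_r in HC. exact HC.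
        * apply (is_RInt_Chasles (V:=R_NormedModule)) with 2.
          -- apply is_RInt_ext with (fG s).
             intros z Hz. rewrite Rmin_left, Rmax_right in Hz by lra. unfold h.
             destruct Rle_dec; [lra|]. destruct Rle_dec; [auto|lra].
             apply RInt_cor; auto.
          -- apply is_RInt_ext with (fun _ => 0).
             intros z Hz. rewrite Rmin_left, Rmax_right in Hz by lra. unfold h.
             destruct Rle_dec; [lra|]. destruct Rle_dec; [lra|auto].
             assert (HC := is_RInt_const (V:=R_NormedModule) 2 y 0). rewrite scal_R, Rmult_0_r in HC. exact HC.
    - apply filterlim_const. }
  assert (Hn := RInt_gen_norm (V:=R_CompleteNormedModule) (Fa := at_right 0) (Fb := Rbar_locally p_infty) h (fG s) V (Gamma s)).
  assert (Hle : norm V <= Gamma s).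
  { apply Hn; auto.
    - apply (Filter_prod _ _ _ (fun x => 0 < x < 1) (fun y => 2 < y)).
      + exists (mkposreal 1 Rlt_0_1). intros y By Hy.
        assert (B : Rabs (y - 0) < 1) by exact By. apply Rabs_def2 in B. lra.
      + exists 2; auto.
      + intros x y Hx Hy; simpl; lra.
    - apply (Filter_prod _ _ _ (fun x => 0 < x) (fun y => 0 < y)).
      + exists (mkposreal 1 Rlt_0_1). intros y By Hy. auto.
      + exists 0; auto.
      + intros a b Ha Hb z Hz. simpl in *. assert (Hz0 : 0 < z) by lra.
        change (Rabs (h z) <= fG s z). unfold h.
        pose proof (fG_pos s z Hz0).
        destruct Rle_dec; [|destruct Rle_dec]; rewrite ?Rabs_R0, ?Rabs_pos_eq; lra. }
  change (Rabs V <= Gamma s) in Hle. rewrite Rabs_pos_eq in Hle; lra.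
Qed.

Lemma Bsum d N c j : (1 <= d)%nat ->
  B_ d (2 * j + 1) (pbar (2 * N + 2) c) =
  sum_f_R0 (fun k => c k / (INR d + 2 * INR j + 2 * INR k + 2)) (S N).
Proof.
  intros Hd. unfold B_.
  rewrite (is_RInt_gen_unique (V:=R_CompleteNormedModule) _ _ (int_pbar (d - 1 + (2 * j + 1)) (2 * N + 2) c)).
  rewrite q2. apply sum_ext; intros k _. f_equal.
  replace (d - 1 + (2 * j + 1) + (2 * k + 1) + 1)%nat with (d + 2 * j + 2 * k + 2)%nat by lia.
  rewrite !plus_INR, !mult_INR. replace (INR 2) with 2 by (simpl; ring). ring.
Qed.

Lemma Mom d N j : (1 <= d)%nat ->
  sum_f_R0 (fun k => cfin d N k / (INR d + 2 * INR j + 2 * INR k + 2)) (S N) =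
  - (INR d + 2 * INR j) * Kc d (2 * N + 2) * / INR (Factorial.fact (N + 2)) * Sj (INR d / 2) N j.
Proof.
  intros Hd.
  assert (Hd1 : 1 <= INR d) by (apply (le_INR 1); auto).
  set (a := INR d / 2).
  set (Dj := INR d + 2 * INR j).
  assert (HDj : 1 <= Dj) by (unfold Dj; pose proof (pos_INR j); lra).
  set (phi := fun k : nat => INR (2 * k + 2) / (Dj + 2 * INR k + 2)).
  set (psi := fun l : nat => INR (2 * l) / (Dj + 2 * INR l)).
  transitivity (Kc d (2 * N + 2) * / INR (Factorial.fact (N + 2)) *
     sum_f_R0 (fun k => (w N a (S k) - 2 * w N a k + wm (w N a) k) * phi k) (S N)).
  { rewrite <- sum_scal. apply sum_ext; intros k _. unfold cfin, cc, phi, Dj. fold a. unfold Rdiv. ring. }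
  rewrite (reindex (w N a) phi psi N).
  2:{ apply w_gt. }
  2:{ unfold psi. simpl. unfold Rdiv. ring. }
  2:{ intros k. unfold psi, phi. f_equal. f_equal. lia. rewrite S_INR. ring. }
  unfold Sj, altsum. rewrite <- !sum_scal. apply sum_ext. intros l _.
  unfold psi, phi, w.
  assert (Hl := pos_INR l). assert (Hj := pos_INR j).
  assert (Ha : INR d = 2 * a) by (unfold a; field).
  unfold Dj. rewrite Ha. rewrite Ha in Hd1.
  rewrite !plus_INR, !mult_INR, !S_INR. replace (INR 2) with 2 by (simpl; ring).
  change (INR 0) with 0. pose proof (INR_fact_neq_0 (N + 2)). field. repeat split; try lra; auto.
Qed.

Lemma podd1 q c : podd q c 1 = sum_f_R0 c (q / 2).
Proof. unfold podd. apply sum_ext; intros; rewrite pow1; ring. Qed.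

Lemma sum_minus_div (f g : nat -> R) (den : nat -> R) N :
  sum_f_R0 (fun k => (f k - g k) / den k) N = sum_f_R0 (fun k => f k / den k) N - sum_f_R0 (fun k => g k / den k) N.
Proof. rewrite <- sum_minus'. apply sum_ext; intros; unfold Rdiv; ring. Qed.

Theorem lemmaB13 (d q : nat) (hd : (1 <= d)%nat) (hq : (2 <= q)%nat) (hev : Nat.Even q) :
  exists (C : R) (c : nat -> R),
    (C <> 0 /\ in_M d q (pbar q c) /\
     RInt_gen (fun x => x ^ (d + q) * pbar q c x) (at_point 0) (Rbar_locally p_infty) = C /\
     podd q c 1 = 0) /\
    (forall (C' : R) (c' : nat -> R),
       C' <> 0 -> in_M d q (pbar q c') ->
       RInt_gen (fun x => x ^ (d + q) * pbar q c' x) (at_point 0) (Rbar_locally p_infty) = C' ->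
       podd q c' 1 = 0 ->
       C' = C /\ (forall k : nat, (k <= q / 2)%nat -> c' k = c k)) /\
    (forall x : R, 0 <= x -> is_derive (GB d q) x (pbar q c x)).
Proof.
  destruct hev as [m Hm]. destruct m as [|N]; [lia|].
  assert (Hq : q = (2 * N + 2)%nat) by lia. clear Hm. subst q. clear hq.
  assert (Hd1 : 1 <= INR d) by (apply (le_INR 1); auto).
  set (a := INR d / 2).
  assert (Ha : 0 < a) by (unfold a; lra).
  assert (GPa := GammaP_a d hd). fold a in GPa.
  assert (Gpos := Gamma_pos a GPa).
  assert (HPI : 0 < Rpower PI a) by apply Rpower_pos.
  assert (Hfa : INR (Factorial.fact N) <> 0) by apply INR_fact_neq_0.
  assert (Hfa2 : INR (Factorial.fact (N + 2)) <> 0) by apply INR_fact_neq_0.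
  assert (Hrpa : 0 < rp a N) by (apply rp_pos; auto).
  assert (HKc : Kc d (2 * N + 2) = Gamma a * (a * rp a N) / (Rpower PI a * INR (Factorial.fact N))).
  { unfold Kc. fold a.
    replace ((INR d + INR (2 * N + 2)) / 2) with (a + INR (S N))
      by (unfold a; rewrite plus_INR, mult_INR, S_INR; replace (INR 2) with 2 by (simpl; ring); field).
    replace (INR (2 * N + 2) / 2) with (INR (S N))
      by (rewrite plus_INR, mult_INR, S_INR; replace (INR 2) with 2 by (simpl; ring); field).
    rewrite Gamma_shift by auto. rewrite Gamma_nat. reflexivity. }
  assert (HKc0 : Kc d (2 * N + 2) <> 0).
  { rewrite HKc. apply Rgt_not_eq. apply Rdiv_lt_0_compat.
    apply Rmult_lt_0_compat; auto. apply Rmult_lt_0_compat; auto.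
    apply Rmult_lt_0_compat; auto. apply INR_fact_lt_0. }
  set (c := cfin d N).
  assert (Hmom : forall j, B_ d (2 * j + 1) (pbar (2 * N + 2) c) =
     - (INR d + 2 * INR j) * Kc d (2 * N + 2) * / INR (Factorial.fact (N + 2)) * Sj a N j).
  { intros j. rewrite Bsum by auto. apply Mom; auto. }
  assert (HB1 : B_ d 1 (pbar (2 * N + 2) c) = - INR d / b_ d).
  { change 1%nat with (2 * 0 + 1)%nat. rewrite Hmom, Sj_0 by auto.
    rewrite HKc, rp2_fact. replace (S (S N)) with (N + 2)%nat by lia.
    unfold b_. fold a. replace (INR d) with (2 * a) by (unfold a; field).
    change (INR 0) with 0. field. repeat split; lra. }
  assert (HBm : forall j, (1 <= j <= N)%nat -> B_ d (2 * j + 1) (pbar (2 * N + 2) c) = 0).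
  { intros j Hj. rewrite Hmom, Sj_mid by auto. ring. }
  assert (HBl : B_ d (2 * S N + 1) (pbar (2 * N + 2) c) <> 0).
  { rewrite Hmom, Sj_last by auto.
    assert (Hr : rp (- (INR N + 3)) N <> 0).
    { apply rp_neq0. intros t Ht. assert (INR t <= INR N) by (apply le_INR; lia). lra. }
    assert (HN := pos_INR N). assert (HSN := pos_INR (S N)).
    assert (0 < rp (a + INR N + 3) N) by (apply rp_pos; lra).
    apply Rmult_integral_contrapositive; split.
    - apply Rmult_integral_contrapositive; split.
      + apply Rmult_integral_contrapositive; split; [lra|auto].
      + apply Rinv_neq_0_compat; auto.
    - apply Rmult_integral_contrapositive; split; auto.
      apply Rmult_integral_contrapositive; split; auto.
      apply Rinv_neq_0_compat. apply Rgt_not_eq. apply Rmult_lt_0_compat; lra. }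
  set (C := RInt_gen (fun x => x ^ (d + (2 * N + 2)) * pbar (2 * N + 2) c x) (at_point 0) (Rbar_locally p_infty)).
  assert (HC : C = B_ d (2 * S N + 1) (pbar (2 * N + 2) c)).
  { unfold C, B_. replace (d - 1 + (2 * S N + 1))%nat with (d + (2 * N + 2))%nat by lia. reflexivity. }
  exists C, c. split; [|split].
  - split; [|split; [|split]].
    + rewrite HC; auto.
    + unfold in_M. split; [exact HB1|split].
      * intros i [j Hj] Hi. subst i. apply HBm. lia.
      * replace (2 * N + 2 + 1)%nat with (2 * S N + 1)%nat by lia. auto.
    + reflexivity.
    + unfold c. rewrite podd_eq, sum_cc_1. ring.
  - intros C' c' HC' HM' HR' Hp'.
    set (dl := fun k => c' k - c k).
    assert (Hdl : forall k, (k <= S N)%nat -> dl k = 0).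
    { apply (uniq_core d N dl).
      - intros j Hj. unfold dl. rewrite sum_minus_div. rewrite <- !Bsum by auto.
        destruct j as [|j].
        + change (2 * 0 + 1)%nat with 1%nat. destruct HM' as [H1 _]. rewrite H1, HB1. ring.
        + destruct HM' as [_ [H2 _]]. rewrite H2. rewrite HBm by lia. ring.
          exists (S j); auto. lia.
      - unfold dl. rewrite sum_minus'. rewrite <- (q2 N), <- !podd1. rewrite Hp'.
        unfold c. rewrite podd_eq, sum_cc_1. ring. }
    split.
    + rewrite <- HR'. unfold C.
      rewrite (is_RInt_gen_unique (V:=R_CompleteNormedModule) _ _ (int_pbar (d + (2 * N + 2)) (2 * N + 2) c')).
      rewrite (is_RInt_gen_unique (V:=R_CompleteNormedModule) _ _ (int_pbar (d + (2 * N + 2)) (2 * N + 2) c)).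
      rewrite q2. apply sum_ext. intros k Hk. specialize (Hdl k Hk). unfold dl in Hdl.
      replace (c' k) with (c k) by lra. reflexivity.
    + intros k Hk. rewrite q2 in Hk. specialize (Hdl k Hk). unfold dl in Hdl. lra.
  - intros x Hx. apply GB_deriv; auto.
Qed.
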